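(* Let $\textnormal{R}\in\{\textnormal{ML},\textnormal{wML},\textnormal{C},\textnormal{S},\textnormal{CH},\textnormal{wCH}\}$, let $\omega\in\Omega$ be a path that is $\textnormal{R}$-random for a computable forecasting system $\varphi$, and let $\epsilon_1,\epsilon_2>0$. Then $\omega$ is $\textnormal{R}$-random for the interval forecast $\big[\liminf_{n\to\infty}\underline{\varphi}(\omega_{1:n})-\epsilon_1,\ \limsup_{n\to\infty}\overline{\varphi}(\omega_{1:n})+\epsilon_2\big]\cap[0,1].$
   Context: $\mathcal{X}=\{0,1\}$; $\Omega=\mathcal{X}^{\mathbb{N}}$ (paths); $\mathbb{S}=\bigcup_{n\geq0}\mathcal{X}^n$ (situations), $\square$ empty string, $|s|$ length, $\omega_{1:n}=(\omega_1,\dots,\omega_n)$, $\omega_{1:0}=\square$. $\mathcal{I}$: nonempty closed intervals $I\subseteq[0,1]$. A forecasting system is a map $\varphi:\mathbb{S}\to\mathcal{I}$, $\underline{\varphi}=\min\varphi$, $\overline{\varphi}=\max\varphi$; an interval forecast $I$ is identified with the constant forecasting system $s\mapsto I$. A real map $r$ on a countable effectively encoded set $\mathcal D$ is computable if there is a recursive $q:\mathcal{D}\times\mathbb{N}_0\to\mathbb{Q}$ with $|r(d)-q(d,n)|<2^{-n}$; lower semicomputable if there is a recursive $q$ with $q(d,n+1)\ge q(d,n)$ and $r(d)=\lim_nq(d,n)$. $\varphi$ computable if $\underline\varphi,\overline\varphi$ are. $\overline{E}_I(f)=\max_{p\in I}[pf(1)+(1-p)f(0)]$. A real process $F:\mathbb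 S\to\mathbb R$ is a supermartingale for $\varphi$ if $\overline{E}_{\varphi(s)}(F(s\,\cdot)-F(s))\le0$ for all $s$; a test supermartingale if also $F\ge0$, $F(\square)=1$. A multiplier process $D$ maps situations to gambles $\mathcal X\to\mathbb R$, generating $D^{\circledcirc}(x_1,\dots,x_n)=\prod_{k=0}^{n-1}D(x_{1:k})(x_{k+1})$; lower semicomputable if $(s,x)\mapsto D(s)(x)$ is. For path $\omega$ and forecasting system $\varphi$: ML-random if no lower semicomputable test supermartingale $T$ for $\varphi$ has $\limsup_nT(\omega_{1:n})=\infty$; wML-random if no test supermartingale for $\varphi$ of the form $D^{\circledcirc}$, $D$ lower semicomputable, has this; C-random if no computable test supermartingale for $\varphi$ has this; S-random if there is no computable test supermartingale $T$ for $\varphi$ and computable non-decreasing unbounded $\tau:\mathbb N_0\to\mathbb R_{\ge0}$ with $\limsup_n[T(\omega_{1:n})-\tau(n)]\ge0$; CH-random (resp. wCH-random) if for every recursive (resp. recursive and temporal, i.e. depending only on $|s|$) $S:\mathbb S\to\{0,1\}$ with $\sum_{k=0}^{n-1}S(\omega_{1:k})\to\infty$: $\liminf_n \frac{\sum_{k<n}S(\omega_{1:k})[\omega_{k+1}-\underline\varphi(\omega_{1:k})]}{\sum_{k<n}S(\omega_{1:k})}\ge0$ and $\limsup_n \frac{\sum_{k<n}S(\omega_{1:k})[\omega_{k+1}-\overline\varphi(\omega_{1:k})]}{\sum_{k<n}S(\omega_{1:k})}\le0$. *)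

(* Defs.v *)
From Stdlib Require Import Reals Lra List QArith Qreals Arith Cantor ZArith.
From Coquelicot Require Import Coquelicot.
Import ListNotations.
Open Scope R_scope.

(* X = {0,1} is represented by bool (true = 1, false = 0).
   A situation is a finite string (x_1,...,x_n) : list bool (x_1 first).
   A path omega is a map nat -> bool with omega_{k+1} = omega k. *)
Definition sit := list bool.
Definition path := nat -> bool.
Definition prefix (w : path) (n : nat) : sit := map w (seq 0 n).
Definition b2R (b : bool) : R := if b then 1 else 0.

Inductive prog : Type :=
| PZero : prog
| PSucc : prog
| PProj : nat -> prog
| PComp : prog -> list prog -> prog
| PPrec : prog -> prog -> prog
| PMu : prog -> prog.

Inductive eval : prog -> list nat -> nat -> Prop :=
| eZero v : eval PZero v 0
| eSucc x v : eval PSucc (x :: v) (S x)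
| eProj i v : (i < length v)%nat -> eval (PProj i) v (nth i v 0%nat)
| eComp f gs v ys y : evals gs v ys -> eval f ys y -> eval (PComp f gs) v y
| ePrec0 f g v y : eval f v y -> eval (PPrec f g) (0%nat :: v) y
| ePrecS f g n v r y :
    eval (PPrec f g) (n :: v) r -> eval g (n :: r :: v) y ->
    eval (PPrec f g) (S n :: v) y
| eMu f v n :
    eval f (n :: v) 0 ->
    (forall m, (m < n)%nat -> exists k, eval f (m :: v) (S k)) ->
    eval (PMu f) v n
with evals : list prog -> list nat -> list nat -> Prop :=
| esNil v : evals nil v nil
| esCons g gs v y ys : eval g v y -> evals gs v ys -> evals (g :: gs) v (y :: ys).

(* bijective binary encoding of situations into nat *)
Definition enc_sit (s : sit) : nat :=
  fold_left (fun (acc : nat) (b : bool) => 2 * acc + (if b then 2 else 1))%nat s 0%nat.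
(* surjective decoding of nat onto Z and onto Q *)
Definition zig (a : nat) : Z :=
  if Nat.even a then Z.of_nat (Nat.div2 a) else (- Z.of_nat (Nat.div2 (S a)))%Z.
Definition decQ (n : nat) : Q :=
  let (a, b) := Cantor.of_nat n in Qmake (zig a) (Pos.of_succ_nat b).

Definition recursive_bool {D : Type} (enc : D -> list nat) (S : D -> bool) : Prop :=
  exists p, forall d, eval p (enc d) (if S d then 1%nat else 0%nat).

Definition computable {D : Type} (enc : D -> list nat) (r : D -> R) : Prop :=
  exists (p : prog) (g : D -> nat -> nat),
    forall d n, eval p (enc d ++ [n]) (g d n) /\
                Rabs (r d - Q2R (decQ (g d n))) < / 2 ^ n.

Definition lower_semicomputable {D : Type} (enc : D -> list nat) (r : D -> R) : Prop :=
  exists (p : prog) (g : D -> nat -> nat),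
    (forall d n, eval p (enc d ++ [n]) (g d n)) /\
    (forall d n, Q2R (decQ (g d n)) <= Q2R (decQ (g d (S n)))) /\
    (forall d, is_lim_seq (fun n => Q2R (decQ (g d n))) (r d)).

Definition enc_S (s : sit) : list nat := [enc_sit s].
Definition enc_SX (sx : sit * bool) : list nat :=
  [enc_sit (fst sx); if snd sx then 1%nat else 0%nat].
Definition enc_N (n : nat) : list nat := [n].

(** * Forecasting systems: phi s = [lo s, hi s] *)
Definition forecasting_system (lo hi : sit -> R) : Prop :=
  forall s, 0 <= lo s /\ lo s <= hi s /\ hi s <= 1.
Definition computable_fs (lo hi : sit -> R) : Prop :=
  computable enc_S lo /\ computable enc_S hi.

(* upper expectation E_{[lo s,hi s]}(F(s .) - F(s)) <= 0, i.e. the max over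
   p in [lo s, hi s] of p f(1) + (1-p) f(0) is <= 0 *)
Definition supermartingale (lo hi : sit -> R) (F : sit -> R) : Prop :=
  forall s p, lo s <= p <= hi s ->
    p * (F (s ++ [true]) - F s) + (1 - p) * (F (s ++ [false]) - F s) <= 0.
Definition test_supermartingale (lo hi : sit -> R) (F : sit -> R) : Prop :=
  supermartingale lo hi F /\ (forall s, 0 <= F s) /\ F [] = 1.

Fixpoint mprod_aux (D : sit -> bool -> R) (s : sit) (k : nat) : R :=
  match k with
  | O => 1
  | S k' => mprod_aux D s k' * D (firstn k' s) (nth k' s false)
  end.
Definition mprod (D : sit -> bool -> R) (s : sit) : R := mprod_aux D s (length s).

Fixpoint psum (f : nat -> R) (n : nat) : R :=
  match n with O => 0 | S n' => psum f n' + f n' end.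

Definition ML_random (lo hi : sit -> R) (w : path) : Prop :=
  ~ exists T, lower_semicomputable enc_S T /\ test_supermartingale lo hi T /\
              LimSup_seq (fun n => T (prefix w n)) = p_infty.

Definition wML_random (lo hi : sit -> R) (w : path) : Prop :=
  ~ exists D : sit -> bool -> R,
      lower_semicomputable enc_SX (fun sx => D (fst sx) (snd sx)) /\
      test_supermartingale lo hi (mprod D) /\
      LimSup_seq (fun n => mprod D (prefix w n)) = p_infty.

Definition C_random (lo hi : sit -> R) (w : path) : Prop :=
  ~ exists T, computable enc_S T /\ test_supermartingale lo hi T /\
              LimSup_seq (fun n => T (prefix w n)) = p_infty.

Definition S_random (lo hi : sit -> R) (w : path) : Prop :=
  ~ exists (T : sit -> R) (tau : nat -> R),
      computable enc_S T /\ test_supermartingale lo hi T /\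
      computable enc_N tau /\ (forall n, 0 <= tau n) /\
      (forall n m, (n <= m)%nat -> tau n <= tau m) /\
      (forall M, exists n, tau n > M) /\
      Rbar_le 0 (LimSup_seq (fun n => T (prefix w n) - tau n)).

Definition sel_count (S : sit -> bool) (w : path) (n : nat) : R :=
  psum (fun k => b2R (S (prefix w k))) n.
Definition sel_avg (S : sit -> bool) (f : sit -> R) (w : path) (n : nat) : R :=
  psum (fun k => b2R (S (prefix w k)) * (b2R (w k) - f (prefix w k))) n
  / sel_count S w n.

Definition CH_condition (lo hi : sit -> R) (w : path) (S : sit -> bool) : Prop :=
  is_lim_seq (sel_count S w) p_infty ->
  Rbar_le 0 (LimInf_seq (sel_avg S lo w)) /\
  Rbar_le (LimSup_seq (sel_avg S hi w)) 0.

Definition CH_random (lo hi : sit -> R) (w : path) : Prop :=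
  forall S : sit -> bool, recursive_bool enc_S S -> CH_condition lo hi w S.

Definition temporal (S : sit -> bool) : Prop :=
  exists g : nat -> bool, forall s, S s = g (length s).

Definition wCH_random (lo hi : sit -> R) (w : path) : Prop :=
  forall S : sit -> bool, recursive_bool enc_S S -> temporal S -> CH_condition lo hi w S.

Inductive rnotion := ML | wML | C | Sch | CH | wCH.

Definition random (Rn : rnotion) (lo hi : sit -> R) (w : path) : Prop :=
  match Rn with
  | ML => ML_random lo hi w
  | wML => wML_random lo hi w
  | C => C_random lo hi w
  | Sch => S_random lo hi w
  | CH => CH_random lo hi w
  | wCH => wCH_random lo hi w
  end.

(* Main.v *)
Require Import Defs.
From Stdlib Require Import Reals Lra Lia List Arith Cantor QArith Qreals ZArith.
From Coquelicot Require Import Coquelicot.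
Import ListNotations.
Open Scope nat_scope.

Definition cf (p : prog) (k : nat) (F : list nat -> nat) : Prop :=
  forall v, length v = k -> eval p v (F v).

Fixpoint cfs (gs : list prog) (k : nat) (Gs : list (list nat -> nat)) : Prop :=
  match gs, Gs with
  | [], [] => True
  | g :: gs', G :: Gs' => cf g k G /\ cfs gs' k Gs'
  | _, _ => False
  end.

Lemma cfs_evals gs k Gs v : cfs gs k Gs -> length v = k ->
  evals gs v (map (fun G => G v) Gs).
Proof.
  revert Gs; induction gs as [|g gs IH]; intros [|G Gs] H Hv; simpl in *; try tauto.
  - constructor.
  - destruct H as [H1 H2]. constructor; auto.
Qed.

Lemma cf_ext p k F G : cf p k F -> (forall v, length v = k -> F v = G v) -> cf p k G.
Proof. intros H E v Hv. rewrite <- E by auto. auto. Qed.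

Lemma cf_comp pf m F gs k Gs : cf pf m F -> cfs gs k Gs -> length Gs = m ->
  cf (PComp pf gs) k (fun v => F (map (fun G => G v) Gs)).
Proof.
  intros HF HG HL v Hv. econstructor. apply (cfs_evals gs k Gs v HG Hv).
  apply HF. rewrite length_map; auto.
Qed.

Lemma cf_zero k : cf PZero k (fun _ => 0).
Proof. intros v _. constructor. Qed.

Lemma cf_proj i k : i < k -> cf (PProj i) k (fun v => nth i v 0).
Proof. intros H v Hv. constructor. lia. Qed.

Lemma cf_succ : cf PSucc 1 (fun v => S (nth 0 v 0)).
Proof. intros [|x [|y v]] H; simpl in H; try lia. constructor. Qed.

Lemma cf_prec pf pg k F G : cf pf k F -> cf pg (S (S k)) G ->
  cf (PPrec pf pg) (S k)
     (fun v => nat_rect (fun _ => nat) (F (tl v)) (fun n r => G (n :: r :: tl v)) (hd 0 v)).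
Proof.
  intros HF HG [|n v] Hv; simpl in Hv; try lia. injection Hv as Hv. simpl.
  induction n as [|n IH]; simpl.
  - constructor. auto.
  - econstructor. apply IH. apply HG. simpl. lia.
Qed.

Lemma cf_comp1 pf F g k G : cf pf 1 F -> cf g k G ->
  cf (PComp pf [g]) k (fun v => F [G v]).
Proof. intros. eapply cf_comp with (Gs := [G]); simpl; eauto. Qed.
Lemma cf_comp2 pf F g1 g2 k G1 G2 : cf pf 2 F -> cf g1 k G1 -> cf g2 k G2 ->
  cf (PComp pf [g1; g2]) k (fun v => F [G1 v; G2 v]).
Proof. intros. eapply cf_comp with (Gs := [G1; G2]); simpl; eauto. Qed.
Lemma cf_comp3 pf F g1 g2 g3 k G1 G2 G3 : cf pf 3 F -> cf g1 k G1 -> cf g2 k G2 -> cf g3 k G3 ->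
  cf (PComp pf [g1; g2; g3]) k (fun v => F [G1 v; G2 v; G3 v]).
Proof. intros. eapply cf_comp with (Gs := [G1; G2; G3]); simpl; eauto. Qed.

Fixpoint pconst (c : nat) : prog :=
  match c with O => PZero | S c' => PComp PSucc [pconst c'] end.
Lemma cf_const c k : cf (pconst c) k (fun _ => c).
Proof.
  induction c; simpl.
  - apply cf_zero.
  - eapply cf_ext. apply cf_comp1. apply cf_succ. apply IHc. reflexivity.
Qed.

Definition cf1 p (f : nat -> nat) := cf p 1 (fun v => f (nth 0 v 0)).
Definition cf2 p (f : nat -> nat -> nat) := cf p 2 (fun v => f (nth 0 v 0) (nth 1 v 0)).

Lemma use1 p f g k G : cf1 p f -> cf g k G -> cf (PComp p [g]) k (fun v => f (G v)).
Proof. intros. eapply cf_ext. apply cf_comp1; eauto. reflexivity. Qed.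
Lemma use2 p f g1 g2 k G1 G2 : cf2 p f -> cf g1 k G1 -> cf g2 k G2 ->
  cf (PComp p [g1; g2]) k (fun v => f (G1 v) (G2 v)).
Proof. intros. eapply cf_ext. apply cf_comp2; eauto. reflexivity. Qed.

Definition ppred := PPrec PZero (PProj 0).
Lemma cf_pred : cf1 ppred pred.
Proof.
  unfold cf1. eapply cf_ext. apply cf_prec. apply cf_zero. apply cf_proj. lia.
  intros [|[|n] [|]] H; simpl in *; try lia; reflexivity.
Qed.

Definition padd := PPrec (PProj 0) (PComp PSucc [PProj 1]).
Lemma cf_add : cf2 padd Nat.add.
Proof.
  unfold cf2. eapply cf_ext. apply cf_prec. apply cf_proj. lia.
  eapply cf_ext. apply cf_comp1. apply cf_succ. apply cf_proj. lia. reflexivity.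
  intros [|n [|y [|]]] H; simpl in *; try lia.
  induction n; simpl; auto.
Qed.

Definition pmul := PPrec PZero (PComp padd [PProj 1; PProj 2]).
Lemma cf_mul : cf2 pmul Nat.mul.
Proof.
  unfold cf2. eapply cf_ext. apply cf_prec. apply cf_zero.
  apply use2. apply cf_add. apply cf_proj; lia. apply cf_proj; lia.
  intros [|n [|y [|]]] H; simpl in *; try lia.
  induction n; simpl; auto. rewrite IHn. lia.
Qed.

(* subtraction: subr y x = x - y by recursion on y *)
Definition psubr := PPrec (PProj 0) (PComp ppred [PProj 1]).
Definition psub := PComp psubr [PProj 1; PProj 0].
Lemma cf_sub : cf2 psub Nat.sub.
Proof.
  unfold cf2. eapply cf_ext. apply cf_comp2.
  eapply cf_prec. apply cf_proj. lia. apply use1. apply cf_pred. apply cf_proj. lia.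
  apply cf_proj; lia. apply cf_proj; lia.
  intros [|x [|y [|]]] H; simpl in *; try lia.
  induction y; simpl. lia. rewrite IHy. lia.
Qed.

Definition b2n (b : bool) : nat := if b then 1 else 0.

Definition pleb := PComp psub [pconst 1; psub].
Lemma cf_leb : cf2 pleb (fun x y => b2n (Nat.leb x y)).
Proof.
  unfold cf2. eapply cf_ext. apply use2. apply cf_sub. apply cf_const.
  apply cf_sub.
  intros v _. cbv beta. destruct (Nat.leb_spec (nth 0 v 0) (nth 1 v 0)); destruct (nth 0 v 0 - nth 1 v 0) eqn:E; simpl; lia.
Qed.

Definition peqb := PComp pmul [pleb; PComp pleb [PProj 1; PProj 0]].
Lemma cf_eqb : cf2 peqb (fun x y => b2n (Nat.eqb x y)).
Proof.
  unfold cf2. eapply cf_ext. apply use2. apply cf_mul. apply cf_leb.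
  apply use2. apply cf_leb. apply cf_proj; lia. apply cf_proj; lia.
  intros v _. cbv beta. destruct (Nat.eqb_spec (nth 0 v 0) (nth 1 v 0)).
  - rewrite e, Nat.leb_refl. reflexivity.
  - destruct (Nat.leb_spec (nth 0 v 0) (nth 1 v 0)); destruct (Nat.leb_spec (nth 1 v 0) (nth 0 v 0)); simpl; lia.
Qed.

Definition cfb p k (B : list nat -> bool) := cf p k (fun v => b2n (B v)).

Lemma cfb_leb p1 p2 k F1 F2 : cf p1 k F1 -> cf p2 k F2 ->
  cfb (PComp pleb [p1; p2]) k (fun v => Nat.leb (F1 v) (F2 v)).
Proof. intros. unfold cfb. apply (use2 _ (fun x y => b2n (Nat.leb x y))); auto. apply cf_leb. Qed.
Lemma cfb_eqb p1 p2 k F1 F2 : cf p1 k F1 -> cf p2 k F2 ->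
  cfb (PComp peqb [p1; p2]) k (fun v => Nat.eqb (F1 v) (F2 v)).
Proof. intros. unfold cfb. apply (use2 _ (fun x y => b2n (Nat.eqb x y))); auto. apply cf_eqb. Qed.
Lemma cfb_and p1 p2 k B1 B2 : cfb p1 k B1 -> cfb p2 k B2 ->
  cfb (PComp pmul [p1; p2]) k (fun v => andb (B1 v) (B2 v)).
Proof.
  intros. unfold cfb. eapply cf_ext. apply use2. apply cf_mul. apply H. apply H0.
  intros v _. cbv beta. destruct (B1 v), (B2 v); reflexivity.
Qed.
Lemma cfb_neg p k B : cfb p k B ->
  cfb (PComp psub [pconst 1; p]) k (fun v => negb (B v)).
Proof.
  intros. unfold cfb. eapply cf_ext. apply use2. apply cf_sub. apply cf_const. apply H.
  intros v _. cbv beta. destruct (B v); reflexivity.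
Qed.
Lemma cfb_true k : cfb (pconst 1) k (fun _ => true).
Proof. apply cf_const. Qed.
Lemma cf_ite pb p1 p2 k B F1 F2 : cfb pb k B -> cf p1 k F1 -> cf p2 k F2 ->
  cf (PComp padd [PComp pmul [pb; p1]; PComp pmul [PComp psub [pconst 1; pb]; p2]]) k
     (fun v => if B v then F1 v else F2 v).
Proof.
  intros. eapply cf_ext. apply use2. apply cf_add.
  apply use2. apply cf_mul. apply H. apply H0.
  apply use2. apply cf_mul. apply use2. apply cf_sub. apply cf_const. apply H. apply H1.
  intros v _. cbv beta. destruct (B v); simpl; lia.
Qed.

Definition projs (a k : nat) : list prog := map PProj (seq a k).
Lemma evals_projs a k v : a + k <= length v ->
  evals (projs a k) v (map (fun i => nth i v 0) (seq a k)).
Proof.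
  revert a; induction k; intros a H; simpl.
  - constructor.
  - constructor. constructor. lia. apply IHk. lia.
Qed.
Lemma map_nth_seq v : map (fun i => nth i v 0) (seq 0 (length v)) = v.
Proof.
  induction v as [|x v IH]; simpl; auto. f_equal.
  rewrite <- seq_shift, map_map. simpl. exact IH.
Qed.

Fixpoint cnt (m : nat) (f : nat -> bool) : nat :=
  match m with O => 0 | S m' => cnt m' f + b2n (f m') end.

Definition pcnt (pB : prog) (k : nat) : prog :=
  PPrec PZero (PComp padd [PProj 1; PComp pB (PProj 0 :: projs 2 k)]).
Lemma map_nth_seq2 a b v : map (fun i => nth i (a :: b :: v) 0) (seq 2 (length v)) = v.
Proof.
  rewrite <- (map_nth_seq v) at 2. rewrite <- !seq_shift, !map_map. reflexivity.
Qed.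

Lemma cf_cnt pB k B : cfb pB (S k) B ->
  cf (pcnt pB k) (S k) (fun v => cnt (hd 0 v) (fun j => B (j :: tl v))).
Proof.
  intros HB. unfold pcnt.
  assert (HG : cf (PComp padd [PProj 1; PComp pB (PProj 0 :: projs 2 k)]) (S (S k))
     (fun w => nth 1 w 0 + b2n (B (nth 0 w 0 :: skipn 2 w)))).
  { intros w Hw. destruct w as [|n [|r v]]; simpl in Hw; try lia. simpl.
    injection Hw as Hw.
    econstructor. constructor. constructor; simpl; lia. constructor.
    econstructor. constructor. constructor; simpl; lia.
    apply evals_projs. simpl. lia.
    rewrite <- Hw, map_nth_seq2. apply HB. simpl. lia.
    constructor. apply cf_add. reflexivity. }
  eapply cf_ext. apply cf_prec. apply cf_zero. apply HG.
  intros [|m v] Hv; simpl in Hv; try lia. simpl.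
  induction m; simpl; auto.
Qed.

Lemma cf_cnt_at pB k B pm M : cfb pB (S k) B -> cf pm k M ->
  cf (PComp (pcnt pB k) (pm :: projs 0 k)) k (fun v => cnt (M v) (fun j => B (j :: v))).
Proof.
  intros HB HM v Hv. econstructor. constructor. apply HM; auto.
  apply evals_projs. lia.
  rewrite <- Hv at 2. rewrite map_nth_seq.
  apply (cf_cnt _ _ _ HB (M v :: v)). simpl. lia.
Qed.
Open Scope nat_scope.

Definition CF k F := exists p, cf p k F.
Definition CFB k (B : list nat -> bool) := exists p, cfb p k B.

Lemma CF_ext k F G : CF k F -> (forall v, length v = k -> F v = G v) -> CF k G.
Proof. intros [p H] E. exists p. eapply cf_ext; eauto. Qed.
Lemma CFB_ext k F G : CFB k F -> (forall v, length v = k -> F v = G v) -> CFB k G.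
Proof. intros [p H] E. exists p. eapply cf_ext; eauto. intros. cbv beta. rewrite E; auto. Qed.
Lemma CF_proj i k : i < k -> CF k (fun v => nth i v 0).
Proof. intros. eexists. apply cf_proj; auto. Qed.
Lemma CF_const c k : CF k (fun _ => c).
Proof. eexists. apply cf_const. Qed.
Lemma CF_add k F1 F2 : CF k F1 -> CF k F2 -> CF k (fun v => F1 v + F2 v).
Proof. intros [p1 H1] [p2 H2]. eexists. apply (use2 padd Nat.add); eauto. apply cf_add. Qed.
Lemma CF_sub k F1 F2 : CF k F1 -> CF k F2 -> CF k (fun v => F1 v - F2 v).
Proof. intros [p1 H1] [p2 H2]. eexists. apply (use2 psub Nat.sub); eauto. apply cf_sub. Qed.
Lemma CF_mul k F1 F2 : CF k F1 -> CF k F2 -> CF k (fun v => F1 v * F2 v).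
Proof. intros [p1 H1] [p2 H2]. eexists. apply (use2 pmul Nat.mul); eauto. apply cf_mul. Qed.
Lemma CFB_leb k F1 F2 : CF k F1 -> CF k F2 -> CFB k (fun v => Nat.leb (F1 v) (F2 v)).
Proof. intros [p1 H1] [p2 H2]. eexists. apply cfb_leb; eauto. Qed.
Lemma CFB_eqb k F1 F2 : CF k F1 -> CF k F2 -> CFB k (fun v => Nat.eqb (F1 v) (F2 v)).
Proof. intros [p1 H1] [p2 H2]. eexists. apply cfb_eqb; eauto. Qed.
Lemma CFB_and k B1 B2 : CFB k B1 -> CFB k B2 -> CFB k (fun v => andb (B1 v) (B2 v)).
Proof. intros [p1 H1] [p2 H2]. eexists. apply cfb_and; eauto. Qed.
Lemma CFB_neg k B : CFB k B -> CFB k (fun v => negb (B v)).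
Proof. intros [p1 H1]. eexists. apply cfb_neg; eauto. Qed.
Lemma CFB_true k : CFB k (fun _ => true).
Proof. eexists. apply cfb_true. Qed.
Lemma CF_ite k B F1 F2 : CFB k B -> CF k F1 -> CF k F2 -> CF k (fun v => if B v then F1 v else F2 v).
Proof. intros [p H] [p1 H1] [p2 H2]. eexists. apply cf_ite; eauto. Qed.
Lemma CF_cnt_at k B M : CFB (S k) B -> CF k M -> CF k (fun v => cnt (M v) (fun j => B (j :: v))).
Proof. intros [p H] [p1 H1]. eexists. apply cf_cnt_at; eauto. Qed.
Lemma CF_of_b k B : CFB k B -> CF k (fun v => b2n (B v)).
Proof. intros [p H]. exists p. exact H. Qed.

Definition CF1 (f : nat -> nat) := CF 1 (fun v => f (nth 0 v 0)).
Lemma CF_S : CF1 S.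
Proof. exists PSucc. apply cf_succ. Qed.
Definition CF2 (f : nat -> nat -> nat) := CF 2 (fun v => f (nth 0 v 0) (nth 1 v 0)).
Lemma CF_use1 f k G : CF1 f -> CF k G -> CF k (fun v => f (G v)).
Proof. intros [p H] [q HG]. eexists. eapply cf_ext. apply (cf_comp1 p _ q k G H HG). reflexivity. Qed.
Lemma CF_use2 f k G1 G2 : CF2 f -> CF k G1 -> CF k G2 -> CF k (fun v => f (G1 v) (G2 v)).
Proof. intros [p H] [q1 H1] [q2 H2]. eexists. eapply cf_ext. apply (cf_comp2 p _ q1 q2 k G1 G2 H H1 H2). reflexivity. Qed.
Lemma CF_use3 (f : nat -> nat -> nat -> nat) k G1 G2 G3 :
  CF 3 (fun v => f (nth 0 v 0) (nth 1 v 0) (nth 2 v 0)) -> CF k G1 -> CF k G2 -> CF k G3 ->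
  CF k (fun v => f (G1 v) (G2 v) (G3 v)).
Proof. intros [p H] [q1 H1] [q2 H2] [q3 H3]. eexists. eapply cf_ext. apply (cf_comp3 p _ q1 q2 q3 k G1 G2 G3 H H1 H2 H3). reflexivity. Qed.

Lemma CF_prec1 (f : nat -> nat) (g : nat -> nat -> nat -> nat) :
  CF1 f -> CF 3 (fun v => g (nth 0 v 0) (nth 1 v 0) (nth 2 v 0)) ->
  CF2 (fun n x => nat_rect (fun _ => nat) (f x) (fun m r => g m r x) n).
Proof.
  intros [p H] [q HG]. eexists. eapply cf_ext. apply cf_prec; eauto.
  intros [|n [|x []]] Hv; simpl in Hv; try lia. reflexivity.
Qed.
Lemma CF_prec0 (c : nat) (g : nat -> nat -> nat) :
  CF 2 (fun v => g (nth 0 v 0) (nth 1 v 0)) ->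
  CF1 (fun n => nat_rect (fun _ => nat) c (fun m r => g m r) n).
Proof.
  intros [q HG]. eexists. eapply cf_ext. apply cf_prec. apply (cf_const c). eauto.
  intros [|n []] Hv; simpl in Hv; try lia. reflexivity.
Qed.

Definition evn (n : nat) : nat := nat_rect (fun _ => nat) 1 (fun m r => 1 - r) n.
Lemma evn_spec n : evn n = b2n (Nat.even n).
Proof.
  induction n as [|n IH]; [reflexivity|]. change (evn (S n)) with (1 - evn n). rewrite IH.
  rewrite Nat.even_succ, <- Nat.negb_even. destruct (Nat.even n); reflexivity.
Qed.
Lemma CF_evn : CF1 evn.
Proof.
  apply CF_prec0. apply CF_sub. apply CF_const. apply CF_proj. lia.
Qed.
Definition dv2 (n : nat) : nat := nat_rect (fun _ => nat) 0 (fun m r => r + (1 - evn m)) n.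
Lemma div2_S n : Nat.div2 (S n) = Nat.div2 n + (if Nat.even n then 0 else 1).
Proof.
  assert (forall n, Nat.div2 (S n) = Nat.div2 n + (if Nat.even n then 0 else 1) /\
                    Nat.div2 (S (S n)) = Nat.div2 (S n) + (if Nat.even (S n) then 0 else 1)).
  { induction n0 as [|n0 [IH1 IH2]]. simpl. auto.
    split; auto. change (Nat.div2 (S (S (S n0)))) with (S (Nat.div2 (S n0))).
    change (Nat.div2 (S (S n0))) with (S (Nat.div2 n0)).
    rewrite Nat.even_succ_succ. rewrite IH1. lia. }
  apply H.
Qed.
Lemma dv2_spec n : dv2 n = Nat.div2 n.
Proof.
  induction n as [|n IH]; [reflexivity|]. change (dv2 (S n)) with (dv2 n + (1 - evn n)). rewrite IH, div2_S, evn_spec.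
  destruct (Nat.even n); simpl; lia.
Qed.
Lemma CF_div2 : CF1 Nat.div2.
Proof.
  eapply CF_ext. apply CF_prec0 with (c := 0) (g := fun m r => r + (1 - evn m)).
  apply CF_add. apply CF_proj. lia. apply CF_sub. apply CF_const.
  apply CF_use1. apply CF_evn. apply CF_proj. lia.
  intros v _. apply dv2_spec.
Qed.
Lemma CF_even : CFB 1 (fun v => Nat.even (nth 0 v 0)).
Proof.
  destruct CF_evn as [p H]. exists p. eapply cf_ext. apply H. intros v _. apply evn_spec.
Qed.

Definition parent (e : nat) : nat := Nat.div2 (e - 1).
Lemma CF_parent : CF1 parent.
Proof. unfold parent. apply (CF_use1 Nat.div2). apply CF_div2. apply CF_sub. apply CF_proj; lia. apply CF_const. Qed.

Definition iterP (j e : nat) : nat := Nat.iter j parent e.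
Lemma CF_iterP : CF2 iterP.
Proof.
  eapply CF_ext. apply CF_prec1 with (f := fun x => x) (g := fun m r x => parent r).
  apply CF_proj. lia. apply CF_use1. apply CF_parent. apply CF_proj. lia.
  intros v Hv. destruct v as [|j [|e [|]]]; simpl in Hv; try lia. unfold iterP. simpl.
  induction j; simpl; congruence.
Qed.

Definition Tri (k : nat) : nat := nat_rect (fun _ => nat) 0 (fun i m => S i + m) k.
Lemma to_nat_Tri x y : Cantor.to_nat (x, y) = y + Tri (y + x).
Proof. reflexivity. Qed.
Lemma CF_Tri : CF1 Tri.
Proof.
  eapply CF_ext. apply CF_prec0 with (c := 0) (g := fun i m => S i + m).
  apply CF_add. apply (CF_use1 S). exists PSucc. apply cf_succ. apply CF_proj; lia. apply CF_proj; lia.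
  intros v _. unfold Tri. simpl. reflexivity.
Qed.
Lemma Tri_S k : Tri (S k) = S k + Tri k.
Proof. reflexivity. Qed.
Lemma Tri_mono a b : a <= b -> Tri a <= Tri b.
Proof. induction 1; auto. rewrite Tri_S. lia. Qed.
Lemma Tri_ge k : k <= Tri k.
Proof. induction k; auto. rewrite Tri_S. lia. Qed.

Definition sdiag (c : nat) : nat := cnt (S c) (fun m => Nat.leb (Tri (S m)) c).
Definition sndc (c : nat) : nat := c - Tri (sdiag c).
Definition fstc (c : nat) : nat := sdiag c - sndc c.

Lemma cnt_ext m f g : (forall j, j < m -> f j = g j) -> cnt m f = cnt m g.
Proof. induction m; simpl; intros; auto. rewrite IHm, H; auto. Qed.
Lemma cnt_lt m K : cnt m (fun j => Nat.ltb j K) = Nat.min m K.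
Proof.
  induction m; [reflexivity|]. cbn [cnt]. rewrite IHm.
  destruct (Nat.ltb_spec m K); unfold b2n; lia.
Qed.
Lemma cnt_zero m f : cnt m f = 0 <-> (forall j, j < m -> f j = false).
Proof.
  induction m; simpl; split; intros; try lia.
  - destruct (f m) eqn:E; simpl in H; try lia.
    assert (j < m \/ j = m) as [|] by lia; subst; auto. apply IHm; auto. lia.
  - rewrite H by lia. simpl. rewrite Nat.add_0_r. apply IHm. intros. apply H. lia.
Qed.

Lemma cantor_dec c : Cantor.of_nat c = (fstc c, sndc c).
Proof.
  destruct (Cantor.of_nat c) as [x y] eqn:E.
  assert (Hc : c = y + Tri (y + x)).
  { rewrite <- (Cantor.cancel_to_of c), E. reflexivity. }
  assert (Hs : sdiag c = y + x).
  { unfold sdiag. rewrite (cnt_ext _ _ (fun j => Nat.ltb j (y + x))).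
    - rewrite cnt_lt. pose proof (Tri_ge (y + x)). lia.
    - intros j _. destruct (Nat.ltb_spec j (y + x)).
      + apply Nat.leb_le. pose proof (Tri_mono (S j) (y + x)). lia.
      + apply Nat.leb_gt. pose proof (Tri_mono (S (y + x)) (S j)). rewrite Tri_S in H0. lia. }
  unfold fstc, sndc. rewrite Hs. f_equal; lia.
Qed.

Lemma CF_sdiag : CF1 sdiag.
Proof.
  unfold sdiag. eapply CF_ext. apply (CF_cnt_at 1 (fun w => Nat.leb (Tri (S (nth 0 w 0))) (nth 1 w 0)) (fun v => S (nth 0 v 0))).
  apply CFB_leb. apply (CF_use1 Tri). apply CF_Tri. apply (CF_use1 S). apply CF_S. apply CF_proj; lia.
  apply CF_proj; lia. apply (CF_use1 S). apply CF_S. apply CF_proj; lia.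
  intros v _. reflexivity.
Qed.
Lemma CF_sndc : CF1 sndc.
Proof. unfold sndc. apply CF_sub. apply CF_proj; lia. apply CF_use1. apply CF_Tri. apply CF_use1. apply CF_sdiag. apply CF_proj; lia. Qed.
Lemma CF_fstc : CF1 fstc.
Proof. unfold fstc. apply CF_sub. apply CF_use1. apply CF_sdiag. apply CF_proj; lia. apply CF_use1. apply CF_sndc. apply CF_proj; lia. Qed.
Lemma CF_to_nat : CF2 (fun x y => Cantor.to_nat (x, y)).
Proof.
  eapply CF_ext with (F := fun v => nth 1 v 0 + Tri (nth 1 v 0 + nth 0 v 0)).
  apply CF_add. apply CF_proj; lia. apply CF_use1. apply CF_Tri. apply CF_add; apply CF_proj; lia.
  intros. reflexivity.
Qed.
Open Scope nat_scope.

Lemma enc_snoc s b : enc_sit (s ++ [b]) = 2 * enc_sit s + (if b then 2 else 1).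
Proof. unfold enc_sit. rewrite fold_left_app. simpl. lia. Qed.

Lemma parent_snoc s b : parent (enc_sit (s ++ [b])) = enc_sit s.
Proof.
  rewrite enc_snoc. unfold parent. destruct b.
  - replace (2 * enc_sit s + 2 - 1) with (S (2 * enc_sit s)) by lia.
    apply Nat.div2_succ_double.
  - replace (2 * enc_sit s + 1 - 1) with (2 * enc_sit s) by lia.
    apply Nat.div2_double.
Qed.

Lemma enc_nil : enc_sit [] = 0.
Proof. reflexivity. Qed.
Lemma parent_0 : parent 0 = 0.
Proof. reflexivity. Qed.

Lemma enc_len s : length s <= enc_sit s.
Proof.
  induction s as [|b s IH] using rev_ind; simpl; auto.
  rewrite enc_snoc, length_app. simpl. destruct b; lia.
Qed.
Lemma enc_pos s : s <> [] -> 0 < enc_sit s.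
Proof.
  intros H. destruct s as [|b s] using rev_ind. congruence. rewrite enc_snoc. destruct b; lia.
Qed.

Lemma iterP_0 j : iterP j 0 = 0.
Proof. unfold iterP. induction j; simpl; auto. rewrite IHj. reflexivity. Qed.

Lemma iterP_enc j s : iterP j (enc_sit s) = enc_sit (firstn (length s - j) s).
Proof.
  revert j. induction s as [|b s IH] using rev_ind; intros j.
  - simpl. rewrite iterP_0. destruct (0 - j); reflexivity.
  - rewrite length_app. simpl. destruct j.
    + rewrite Nat.sub_0_r, firstn_all2 by (rewrite length_app; simpl; lia). reflexivity.
    + unfold iterP. rewrite Nat.iter_succ_r. rewrite parent_snoc. fold (iterP j (enc_sit s)).
      rewrite IH. rewrite firstn_app. replace (length s + 1 - S j - length s) with 0 by lia.
      simpl. rewrite app_nil_r. f_equal. f_equal. lia.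
Qed.

Fixpoint decf (fuel e : nat) : sit :=
  match fuel with
  | O => []
  | S f => if Nat.eqb e 0 then [] else decf f (parent e) ++ [Nat.even e]
  end.
Definition dec (e : nat) : sit := decf e e.

Lemma parent_lt e : 0 < e -> parent e < e.
Proof. intros. unfold parent. pose proof (Nat.div2_decr (e - 1) (e - 1)). 
  assert (Nat.div2 (e-1) <= e - 1). apply Nat.div2_decr; lia. lia. Qed.

Lemma parent_spec e : 0 < e -> e = 2 * parent e + (if Nat.even e then 2 else 1).
Proof.
  intros He. unfold parent. destruct e as [|e]; [lia|]. replace (S e - 1) with e by lia.
  rewrite Nat.even_succ. rewrite (Nat.div2_odd e) at 1.
  destruct (Nat.odd e); simpl; lia.
Qed.

Lemma enc_decf f e : e <= f -> enc_sit (decf f e) = e.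
Proof.
  revert e; induction f; intros e H; simpl.
  - assert (e = 0) by lia. subst. reflexivity.
  - destruct (Nat.eqb_spec e 0). subst; reflexivity.
    rewrite enc_snoc. rewrite IHf. symmetry. apply parent_spec. lia.
    pose proof (parent_lt e). lia.
Qed.
Lemma enc_dec e : enc_sit (dec e) = e.
Proof. apply enc_decf. lia. Qed.

Lemma even_enc_snoc s b : Nat.even (enc_sit (s ++ [b])) = b.
Proof.
  rewrite enc_snoc. destruct b.
  - replace (2 * enc_sit s + 2) with (2 * (enc_sit s + 1)) by lia. apply Nat.even_mul.
  - replace (2 * enc_sit s + 1) with (S (2 * enc_sit s)) by lia. rewrite Nat.even_succ.
    apply Nat.odd_mul.
Qed.
Lemma decf_enc f s : enc_sit s <= f -> decf f (enc_sit s) = s.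
Proof.
  revert f. induction s as [|b s IH] using rev_ind; intros f H.
  - destruct f; reflexivity.
  - destruct f. rewrite enc_snoc in H. destruct b; lia.
    simpl. assert (He : enc_sit (s ++ [b]) <> 0) by (rewrite enc_snoc; destruct b; lia).
    destruct (Nat.eqb_spec (enc_sit (s ++ [b])) 0); [contradiction|].
    rewrite parent_snoc, IH, even_enc_snoc; auto.
    rewrite enc_snoc in H. destruct b; lia.
Qed.
Lemma dec_enc s : dec (enc_sit s) = s.
Proof. apply decf_enc. lia. Qed.
Lemma enc_inj s t : enc_sit s = enc_sit t -> s = t.
Proof. intros H. rewrite <- (dec_enc s), <- (dec_enc t), H. reflexivity. Qed.

Definition lenc (e : nat) : nat := cnt (S e) (fun j => Nat.ltb 0 (iterP j e)).
Lemma lenc_enc s : lenc (enc_sit s) = length s.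
Proof.
  unfold lenc. rewrite (cnt_ext _ _ (fun j => Nat.ltb j (length s))).
  - rewrite cnt_lt. pose proof (enc_len s). lia.
  - intros j _. rewrite iterP_enc.
    destruct (Nat.ltb_spec j (length s)).
    + apply Nat.ltb_lt. apply enc_pos. intro E. apply (f_equal (@length bool)) in E.
      rewrite length_firstn in E. simpl in E. lia.
    + replace (length s - j) with 0 by lia. reflexivity.
Qed.

Lemma CFB_use1 B k G : CFB 1 (fun v => B (nth 0 v 0)) -> CF k G -> CFB k (fun v => B (G v)).
Proof.
  intros HB HG. apply (CF_use1 (fun x => b2n (B x))). exact HB. exact HG.
Qed.

Lemma CF_lenc : CF1 lenc.
Proof.
  unfold lenc. eapply CF_ext.
  apply (CF_cnt_at 1 (fun w => Nat.ltb 0 (iterP (nth 0 w 0) (nth 1 w 0))) (fun v => S (nth 0 v 0))).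
  - eapply CFB_ext with (F := fun w => Nat.leb 1 (iterP (nth 0 w 0) (nth 1 w 0))). apply CFB_leb. apply CF_const. apply (CF_use2 iterP). apply CF_iterP.
    apply CF_proj; lia. apply CF_proj; lia. intros. reflexivity.
  - apply (CF_use1 S). apply CF_S. apply CF_proj; lia.
  - intros. reflexivity.
Qed.

Definition goodlo (t : option (nat * nat)) (c : nat) : bool :=
  match t with
  | None => true
  | Some (tn, td) => Nat.even (fstc c) && Nat.leb (tn * (sndc c + 1)) (Nat.div2 (fstc c) * td)
  end.
Definition goodhi (t : option (nat * nat)) (c : nat) : bool :=
  match t with
  | None => true
  | Some (tn, td) => negb (Nat.even (fstc c) && negb (Nat.leb (Nat.div2 (fstc c) * td) (tn * (sndc c + 1))))
  end.

Lemma CFB_goodlo t : CFB 1 (fun v => goodlo t (nth 0 v 0)).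
Proof.
  destruct t as [[tn td]|]; simpl; [|apply CFB_true].
  apply CFB_and. apply (CFB_use1 (fun x => Nat.even x)). apply CF_even.
  apply (CF_use1 fstc). apply CF_fstc. apply CF_proj; lia.
  apply CFB_leb. apply CF_mul. apply CF_const. apply CF_add. apply (CF_use1 sndc). apply CF_sndc.
  apply CF_proj; lia. apply CF_const.
  apply CF_mul. apply (CF_use1 Nat.div2). apply CF_div2. apply (CF_use1 fstc). apply CF_fstc.
  apply CF_proj; lia. apply CF_const.
Qed.
Lemma CFB_goodhi t : CFB 1 (fun v => goodhi t (nth 0 v 0)).
Proof.
  destruct t as [[tn td]|]; simpl; [|apply CFB_true].
  apply CFB_neg. apply CFB_and. apply (CFB_use1 (fun x => Nat.even x)). apply CF_even.
  apply (CF_use1 fstc). apply CF_fstc. apply CF_proj; lia.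
  apply CFB_neg. apply CFB_leb.
  apply CF_mul. apply (CF_use1 Nat.div2). apply CF_div2. apply (CF_use1 fstc). apply CF_fstc.
  apply CF_proj; lia. apply CF_const.
  apply CF_mul. apply CF_const. apply CF_add. apply (CF_use1 sndc). apply CF_sndc.
  apply CF_proj; lia. apply CF_const.
Qed.

Definition extN (N es e : nat) : bool :=
  Nat.leb N (lenc e) && Nat.eqb (iterP (lenc e - N) e) es.
Definition allgoodN (N es : nat) (good : nat -> bool) (e : nat) : bool :=
  extN N es e && Nat.eqb (cnt (lenc e - N + 1) (fun j => negb (good (iterP j e)))) 0.
Definition ccN (N es : nat) (good : nat -> bool) (e : nat) : nat :=
  cnt (lenc e) (fun k => allgoodN N es good (iterP (lenc e - k) e)).
Definition HN (N es : nat) (good : nat -> bool) (e : nat) : nat :=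
  iterP (lenc e - (N + ccN N es good e)) e.
Definition SC (M c : nat) : nat := Cantor.to_nat (fstc c, (sndc c + 1) * M - 1).

Lemma CFB_extN N es : CFB 1 (fun v => extN N es (nth 0 v 0)).
Proof.
  unfold extN. apply CFB_and. apply CFB_leb. apply CF_const. apply (CF_use1 lenc). apply CF_lenc.
  apply CF_proj; lia. apply CFB_eqb. apply (CF_use2 iterP). apply CF_iterP.
  apply CF_sub. apply (CF_use1 lenc). apply CF_lenc. apply CF_proj; lia. apply CF_const.
  apply CF_proj; lia. apply CF_const.
Qed.

Lemma CFB_allgoodN N es good : CFB 1 (fun v => good (nth 0 v 0)) ->
  CFB 1 (fun v => allgoodN N es good (nth 0 v 0)).
Proof.
  intros Hg. unfold allgoodN. apply CFB_and. apply CFB_extN.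
  apply CFB_eqb. 2: apply CF_const.
  apply (CF_cnt_at 1 (fun w => negb (good (iterP (nth 0 w 0) (nth 1 w 0))))
     (fun v => lenc (nth 0 v 0) - N + 1)).
  - apply CFB_neg. apply (CFB_use1 good). exact Hg. apply (CF_use2 iterP). apply CF_iterP.
    apply CF_proj; lia. apply CF_proj; lia.
  - apply CF_add. apply CF_sub. apply (CF_use1 lenc). apply CF_lenc. apply CF_proj; lia.
    apply CF_const. apply CF_const.
Qed.

Lemma CF_ccN N es good : CFB 1 (fun v => good (nth 0 v 0)) -> CF1 (ccN N es good).
Proof.
  intros Hg. unfold ccN, CF1.
  apply (CF_cnt_at 1 (fun w => allgoodN N es good (iterP (lenc (nth 1 w 0) - nth 0 w 0) (nth 1 w 0)))
    (fun v => lenc (nth 0 v 0))).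
  - apply (CFB_use1 (allgoodN N es good)). apply CFB_allgoodN. exact Hg.
    apply (CF_use2 iterP). apply CF_iterP. apply CF_sub. apply (CF_use1 lenc). apply CF_lenc.
    apply CF_proj; lia. apply CF_proj; lia. apply CF_proj; lia.
  - apply (CF_use1 lenc). apply CF_lenc. apply CF_proj; lia.
Qed.

Lemma CF_HN N es good : CFB 1 (fun v => good (nth 0 v 0)) -> CF1 (HN N es good).
Proof.
  intros Hg. unfold HN, CF1. apply (CF_use2 iterP). apply CF_iterP.
  apply CF_sub. apply (CF_use1 lenc). apply CF_lenc. apply CF_proj; lia.
  apply CF_add. apply CF_const. apply (CF_use1 (ccN N es good)). apply CF_ccN; auto. apply CF_proj; lia.
  apply CF_proj; lia.
Qed.

Lemma CF_SC M : CF1 (SC M).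
Proof.
  unfold SC, CF1. apply (CF_use2 (fun x y => Cantor.to_nat (x, y))). apply CF_to_nat.
  apply (CF_use1 fstc). apply CF_fstc. apply CF_proj; lia.
  apply CF_sub. apply CF_mul. apply CF_add. apply (CF_use1 sndc). apply CF_sndc. apply CF_proj; lia.
  apply CF_const. apply CF_const. apply CF_const.
Qed.
Open Scope nat_scope.

Definition extS N σ s := extN N (enc_sit σ) (enc_sit s).
Definition agS N σ good s := allgoodN N (enc_sit σ) good (enc_sit s).
Definition ccS N σ good s := ccN N (enc_sit σ) good (enc_sit s).
Definition hS N σ good s := dec (HN N (enc_sit σ) good (enc_sit s)).

Lemma firstn_firstn' {A} k m (l : list A) : k <= m -> firstn k (firstn m l) = firstn k l.
Proof. intros. rewrite firstn_firstn. f_equal. lia. Qed.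

Lemma extS_iff N σ s : length σ = N ->
  extS N σ s = true <-> N <= length s /\ firstn N s = σ.
Proof.
  intros Hσ. unfold extS, extN. rewrite lenc_enc, iterP_enc, Bool.andb_true_iff, Nat.leb_le, Nat.eqb_eq.
  split; intros [H1 H2]; split; auto.
  - apply enc_inj. rewrite <- H2. f_equal. f_equal. lia.
  - rewrite <- H2. f_equal. f_equal. lia.
Qed.

Lemma agS_iff N σ good s : length σ = N ->
  agS N σ good s = true <->
  (N <= length s /\ firstn N s = σ) /\
  (forall k, N <= k <= length s -> good (enc_sit (firstn k s)) = true).
Proof.
  intros Hσ. unfold agS, allgoodN. rewrite Bool.andb_true_iff.
  fold (extS N σ s). rewrite extS_iff by auto. rewrite Nat.eqb_eq, cnt_zero, lenc_enc.
  split; intros [H1 H2]; split; auto.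
  - intros k Hk. specialize (H2 (length s - k) ltac:(lia)).
    rewrite iterP_enc in H2. replace (length s - (length s - k)) with k in H2 by lia.
    destruct (good _); auto.
  - intros j Hj. rewrite iterP_enc. rewrite H2. reflexivity. lia.
Qed.

Lemma agS_ext N σ good s : length σ = N -> agS N σ good s = true -> extS N σ s = true.
Proof. intros Hσ H. apply extS_iff; auto. apply agS_iff in H; tauto. Qed.

Lemma agS_good N σ good s : length σ = N -> agS N σ good s = true -> good (enc_sit s) = true.
Proof.
  intros Hσ H. apply agS_iff in H; auto. destruct H as [[H1 _] H2].
  rewrite <- (firstn_all s). apply H2. lia.
Qed.

Lemma agS_prefix N σ good s k : length σ = N -> agS N σ good s = true -> N <= k <= length s ->
  agS N σ good (firstn k s) = true.
Proof.
  intros Hσ H Hk. apply agS_iff in H; auto. destruct H as [[H1 H2] H3].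
  apply agS_iff; auto. rewrite length_firstn. split; [split|].
  - lia.
  - rewrite firstn_firstn'; auto. lia.
  - intros k' Hk'. rewrite firstn_firstn'. apply H3. lia. lia.
Qed.

Lemma ccS_eq N σ good s : ccS N σ good s = cnt (length s) (fun k => agS N σ good (firstn k s)).
Proof.
  unfold ccS, ccN. rewrite lenc_enc. apply cnt_ext. intros k Hk.
  rewrite iterP_enc. unfold agS. do 3 f_equal. lia.
Qed.

Lemma cnt_ge m N : cnt m (fun k => Nat.leb N k) = m - N.
Proof.
  induction m; [reflexivity|]. cbn [cnt]. rewrite IHm. destruct (Nat.leb_spec N m); unfold b2n; lia.
Qed.
Lemma cnt_mono m f g : (forall k, k < m -> f k = true -> g k = true) -> cnt m f <= cnt m g.
Proof.
  induction m; intros H; cbn [cnt]; auto.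
  assert (cnt m f <= cnt m g) by (apply IHm; auto).
  specialize (H m). destruct (f m), (g m); unfold b2n; try lia.
Qed.

Lemma ccS_le N σ good s : length σ = N -> ccS N σ good s <= length s - N.
Proof.
  intros Hσ. rewrite ccS_eq. rewrite <- cnt_ge. apply cnt_mono.
  intros k Hk H. apply agS_iff in H; auto. rewrite length_firstn in H. apply Nat.leb_le. lia.
Qed.

Lemma ccS_ag N σ good s : length σ = N -> agS N σ good s = true -> ccS N σ good s = length s - N.
Proof.
  intros Hσ H. rewrite ccS_eq, <- cnt_ge. apply cnt_ext. intros k Hk.
  destruct (Nat.leb_spec N k).
  - apply agS_prefix; auto. lia.
  - destruct (agS N σ good (firstn k s)) eqn:E; auto. apply agS_iff in E; auto.
    rewrite length_firstn in E. lia.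
Qed.

Lemma ccS_snoc N σ good s x : length σ = N ->
  ccS N σ good (s ++ [x]) = ccS N σ good s + b2n (agS N σ good s).
Proof.
  intros Hσ. rewrite !ccS_eq, length_app. simpl. rewrite Nat.add_1_r. cbn [cnt].
  rewrite firstn_app, firstn_all, Nat.sub_diag. simpl. rewrite app_nil_r. f_equal.
  apply cnt_ext. intros k Hk. rewrite firstn_app. replace (k - length s) with 0 by lia.
  simpl. rewrite app_nil_r. reflexivity.
Qed.

Lemma hS_eq N σ good s : length σ = N -> extS N σ s = true ->
  hS N σ good s = firstn (N + ccS N σ good s) s.
Proof.
  intros Hσ He. apply extS_iff in He; auto. pose proof (ccS_le N σ good s Hσ).
  unfold hS, HN. rewrite lenc_enc, iterP_enc, dec_enc. fold (ccS N σ good s). f_equal. lia.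
Qed.

Lemma hS_ag N σ good s : length σ = N -> agS N σ good s = true -> hS N σ good s = s.
Proof.
  intros Hσ H. pose proof (agS_ext _ _ _ _ Hσ H) as He. rewrite hS_eq; auto. rewrite ccS_ag; auto.
  apply agS_iff in H; auto. apply firstn_all2. lia.
Qed.

Lemma extS_snoc N σ s x : length σ = N -> extS N σ s = true -> extS N σ (s ++ [x]) = true.
Proof.
  intros Hσ H. apply extS_iff in H; auto. apply extS_iff; auto. rewrite length_app. split. lia.
  rewrite firstn_app. replace (N - length s) with 0 by lia. simpl. rewrite app_nil_r. tauto.
Qed.

Lemma hS_snoc_bad N σ good s x : length σ = N -> extS N σ s = true -> agS N σ good s = false ->
  hS N σ good (s ++ [x]) = hS N σ good s.
Proof.
  intros Hσ He Ha. rewrite !hS_eq; auto. 2: apply extS_snoc; auto.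
  rewrite ccS_snoc, Ha; auto. simpl. rewrite Nat.add_0_r. rewrite firstn_app.
  pose proof (ccS_le N σ good s Hσ). apply extS_iff in He; auto.
  replace (N + ccS N σ good s - length s) with 0 by lia. simpl. apply app_nil_r.
Qed.

Lemma hS_snoc_good N σ good s x : length σ = N -> agS N σ good s = true ->
  hS N σ good (s ++ [x]) = s ++ [x].
Proof.
  intros Hσ Ha. pose proof (agS_ext _ _ _ _ Hσ Ha) as He.
  rewrite hS_eq; auto. 2: apply extS_snoc; auto.
  rewrite ccS_snoc, Ha, ccS_ag; auto. apply extS_iff in He; auto. apply firstn_all2.
  rewrite length_app. simpl. lia.
Qed.

Lemma extS_short N σ s : length σ = N -> length s < N -> extS N σ s = false.
Proof.
  intros Hσ H. destruct (extS N σ s) eqn:E; auto. apply extS_iff in E; auto. lia.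
Qed.

Lemma extS_not_snoc N σ s x : length σ = N -> N <= length s -> extS N σ s = false ->
  extS N σ (s ++ [x]) = false.
Proof.
  intros Hσ Hl H. destruct (extS N σ (s ++ [x])) eqn:E; auto.
  apply extS_iff in E; auto. rewrite firstn_app in E. replace (N - length s) with 0 in E by lia.
  simpl in E. rewrite app_nil_r in E. assert (extS N σ s = true) by (apply extS_iff; auto; tauto).
  congruence.
Qed.

Lemma extS_reach N σ s x : length σ = N -> length s < N -> extS N σ (s ++ [x]) = true ->
  s ++ [x] = σ.
Proof.
  intros Hσ Hl H. apply extS_iff in H; auto. rewrite length_app in H. simpl in H.
  destruct H as [H1 H2]. rewrite firstn_all2 in H2 by (rewrite length_app; simpl; lia). auto.
Qed.

Lemma hS_sigma N σ good : length σ = N -> hS N σ good σ = σ.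
Proof.
  intros Hσ. rewrite hS_eq; auto. apply firstn_all2. pose proof (ccS_le N σ good σ Hσ). lia.
  apply extS_iff; auto. split. lia. apply firstn_all2. lia.
Qed.
Open Scope R_scope.

Definition zigR (x : nat) : R :=
  if Nat.even x then INR (Nat.div2 x) else - INR (Nat.div2 (S x)).

Lemma Q2R_mk a b : Q2R (Qmake (zig a) (Pos.of_succ_nat b)) = zigR a / (INR b + 1).
Proof.
  unfold Q2R. simpl. rewrite Zpos_P_of_succ_nat, succ_IZR, <- INR_IZR_INZ.
  unfold zig, zigR. destruct (Nat.even a).
  - rewrite <- INR_IZR_INZ. reflexivity.
  - rewrite opp_IZR, <- INR_IZR_INZ. reflexivity.
Qed.

Lemma Q2R_decQ c : Q2R (decQ c) = zigR (fstc c) / (INR (sndc c) + 1).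
Proof. unfold decQ. rewrite cantor_dec. apply Q2R_mk. Qed.

Lemma Q2R_SC M c : (1 <= M)%nat -> Q2R (decQ (SC M c)) = Q2R (decQ c) / INR M.
Proof.
  intros HM. unfold SC, decQ at 1. rewrite Cantor.cancel_of_to, Q2R_mk, Q2R_decQ.
  replace (INR ((sndc c + 1) * M - 1) + 1) with ((INR (sndc c) + 1) * INR M).
  - assert (0 < INR M) by (apply lt_0_INR; lia). pose proof (pos_INR (sndc c)).
    field. lra.
  - rewrite <- (S_INR ((sndc c + 1) * M - 1)). replace (S ((sndc c + 1) * M - 1)) with ((sndc c + 1) * M)%nat.
    rewrite mult_INR, plus_INR. simpl. ring.
    assert (1 <= (sndc c + 1) * M)%nat by nia. lia.
Qed.

Lemma Q2R_decQ3 : Q2R (decQ 3) = 1.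
Proof. rewrite Q2R_decQ. replace (fstc 3) with 2%nat by reflexivity.
  replace (sndc 3) with 0%nat by reflexivity. unfold zigR. simpl. lra. Qed.

Lemma zigR_even x : Nat.even x = true -> zigR x = INR (Nat.div2 x).
Proof. unfold zigR. intros ->. reflexivity. Qed.
Lemma zigR_odd x : Nat.even x = false -> zigR x < 0.
Proof.
  unfold zigR. intros H. rewrite H. destruct x. discriminate.
  change (Nat.div2 (S (S x))) with (S (Nat.div2 x)). rewrite S_INR. pose proof (pos_INR (Nat.div2 x)). lra.
Qed.

Lemma Rdiv_le_iff a b c d : 0 < b -> 0 < d -> (a / b <= c / d <-> a * d <= c * b).
Proof.
  intros Hb Hd. split; intros H.
  - apply Rmult_le_compat_r with (r := b * d) in H; [|nra].
    replace (a / b * (b * d)) with (a * d) in H by (field; lra).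
    replace (c / d * (b * d)) with (c * b) in H by (field; lra). exact H.
  - apply Rmult_le_reg_r with (b * d). nra.
    replace (a / b * (b * d)) with (a * d) by (field; lra).
    replace (c / d * (b * d)) with (c * b) by (field; lra). exact H.
Qed.

Lemma goodlo_iff tn td c : (0 < tn)%nat -> (0 < td)%nat ->
  goodlo (Some (tn, td)) c = true <-> INR tn / INR td <= Q2R (decQ c).
Proof.
  intros Htn Htd. simpl. rewrite Q2R_decQ. pose proof (pos_INR (sndc c)).
  assert (0 < INR td) by (apply lt_0_INR; lia). assert (0 < INR tn) by (apply lt_0_INR; lia).
  rewrite Bool.andb_true_iff, Nat.leb_le. destruct (Nat.even (fstc c)) eqn:E.
  - rewrite zigR_even by auto. rewrite Rdiv_le_iff by lra. split.
    + intros [_ H2]. apply le_INR in H2. rewrite !mult_INR, plus_INR in H2. simpl in H2. lra.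
    + intros H2. split; auto. apply INR_le. rewrite !mult_INR, plus_INR. simpl. lra.
  - split. intros [H3 _]. discriminate.
    intros H2. pose proof (zigR_odd _ E). exfalso.
    assert (zigR (fstc c) / (INR (sndc c) + 1) < 0). apply Rdiv_neg_pos; lra.
    assert (0 < INR tn / INR td) by (apply Rdiv_lt_0_compat; lra). lra.
Qed.

Lemma goodhi_iff tn td c : (0 < td)%nat ->
  goodhi (Some (tn, td)) c = true <-> Q2R (decQ c) <= INR tn / INR td.
Proof.
  intros Htd. simpl. rewrite Q2R_decQ. pose proof (pos_INR (sndc c)).
  assert (0 < INR td) by (apply lt_0_INR; lia). pose proof (pos_INR tn).
  destruct (Nat.even (fstc c)) eqn:E; simpl.
  - rewrite zigR_even by auto. rewrite Bool.negb_true_iff, Bool.negb_false_iff, Nat.leb_le.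
    rewrite Rdiv_le_iff by lra. split.
    + intros H2. apply le_INR in H2. rewrite !mult_INR, plus_INR in H2. simpl in H2. lra.
    + intros H2. apply INR_le. rewrite !mult_INR, plus_INR. simpl. lra.
  - split; auto. intros _. pose proof (zigR_odd _ E).
    assert (zigR (fstc c) / (INR (sndc c) + 1) < 0). apply Rdiv_neg_pos; lra.
    assert (0 <= INR tn / INR td) by (apply Rdiv_le_0_compat; lra). lra.
Qed.
Open Scope R_scope.

Definition Tp (N : nat) (σ : sit) (good : nat -> bool) (M : nat) (T : sit -> R) (s : sit) : R :=
  if extS N σ s then T (hS N σ good s) / INR M else 1.

Lemma Tp_test lo hi c d N σ good M T :
  forecasting_system lo hi -> length σ = N -> (1 <= N)%nat -> (1 <= M)%nat ->
  (forall s, good (enc_sit s) = true -> c <= lo s /\ hi s <= d) ->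
  test_supermartingale (fun _ => c) (fun _ => d) T -> T σ <= INR M ->
  test_supermartingale lo hi (Tp N σ good M T).
Proof.
  intros Hfs Hσ HN HM Hg [HT1 [HT2 HT3]] HTσ.
  assert (HMp : 0 < INR M) by (apply lt_0_INR; lia).
  split; [|split].
  - intros s p Hp. unfold Tp.
    destruct (extS N σ s) eqn:Es.
    + rewrite !extS_snoc by auto.
      destruct (agS N σ good s) eqn:Ea.
      * rewrite !hS_snoc_good, hS_ag by auto.
        pose proof (agS_good _ _ _ _ Hσ Ea) as Hgs. apply Hg in Hgs.
        specialize (HT1 s p ltac:(lra)).
        replace (p * (T (s ++ [true]) / INR M - T s / INR M) + (1 - p) * (T (s ++ [false]) / INR M - T s / INR M))
          with ((p * (T (s ++ [true]) - T s) + (1 - p) * (T (s ++ [false]) - T s)) / INR M) by (field; lra).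
        assert (0 < / INR M) by (apply Rinv_0_lt_compat; lra). unfold Rdiv. nra.
      * rewrite !hS_snoc_bad by auto. lra.
    + destruct (Nat.le_gt_cases N (length s)).
      * rewrite !extS_not_snoc by auto. lra.
      * specialize (Hfs s). 
        assert (forall x, (if extS N σ (s ++ [x]) then T (hS N σ good (s ++ [x])) / INR M else 1) <= 1).
        { intros x. destruct (extS N σ (s ++ [x])) eqn:E'. 
          - rewrite (extS_reach _ _ _ _ Hσ H E'), hS_sigma by auto.
            apply Rcomplements.Rle_div_l; lra.
          - lra. }
        pose proof (H0 true). pose proof (H0 false). nra.
  - intros s. unfold Tp. destruct (extS N σ s). apply Rcomplements.Rdiv_le_0_compat; auto. lra.
  - unfold Tp. rewrite extS_short by (simpl; lia). reflexivity.
Qed.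

Lemma Tp_ag N σ good M T s : length σ = N -> agS N σ good s = true ->
  Tp N σ good M T s = T s / INR M.
Proof.
  intros Hσ H. unfold Tp. rewrite (agS_ext _ _ _ _ Hσ H), hS_ag; auto.
Qed.

Lemma mprod_aux_snoc D s x k : (k <= length s)%nat -> mprod_aux D (s ++ [x]) k = mprod_aux D s k.
Proof.
  induction k; intros Hk; simpl; auto. rewrite IHk by lia. f_equal.
  rewrite firstn_app. replace (k - length s)%nat with 0%nat by lia. simpl. rewrite app_nil_r.
  rewrite app_nth1 by lia. reflexivity.
Qed.
Lemma mprod_snoc D s x : mprod D (s ++ [x]) = mprod D s * D s x.
Proof.
  unfold mprod. rewrite length_app. simpl. rewrite Nat.add_1_r. simpl.
  rewrite mprod_aux_snoc by lia. f_equal. rewrite firstn_app, firstn_all, Nat.sub_diag. simpl.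
  rewrite app_nil_r, app_nth2, Nat.sub_diag by lia. reflexivity.
Qed.
Lemma mprod_nil D : mprod D [] = 1.
Proof. reflexivity. Qed.

Definition Dp (N : nat) (σ : sit) (good : nat -> bool) (D : sit -> bool -> R) (s : sit) (x : bool) : R :=
  if agS N σ good s then D s x else 1.

Lemma Dp_short N σ good D s : length σ = N -> (length s <= N)%nat -> mprod (Dp N σ good D) s = 1.
Proof.
  intros Hσ. induction s as [|y s IH] using rev_ind; intros Hl; auto.
  rewrite length_app in Hl. simpl in Hl.
  rewrite mprod_snoc, IH by lia. unfold Dp.
  destruct (agS N σ good s) eqn:E. apply agS_iff in E; auto. lia. lra.
Qed.

Lemma Dp_rel N σ good D s : length σ = N -> agS N σ good s = true ->
  mprod D s = mprod D σ * mprod (Dp N σ good D) s.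
Proof.
  intros Hσ. induction s as [|y s IH] using rev_ind; intros H.
  - apply agS_iff in H; auto. simpl in H. destruct H as [[H1 H2] _].
    rewrite firstn_nil in H2. subst. rewrite !mprod_nil. ring.
  - destruct (Nat.le_gt_cases N (length s)).
    + assert (Ha : agS N σ good s = true).
      { replace s with (firstn (length s) (s ++ [y])).
        apply agS_prefix; auto. rewrite length_app. simpl. lia.
        rewrite firstn_app, firstn_all, Nat.sub_diag. simpl. apply app_nil_r. }
      rewrite !mprod_snoc, IH by auto. unfold Dp. rewrite Ha. ring.
    + pose proof H as H'. apply agS_iff in H'; auto. destruct H' as [[H1 H2] _].
      rewrite length_app in H1. simpl in H1.
      rewrite firstn_all2 in H2 by (rewrite length_app; simpl; lia). rewrite H2.
      rewrite Dp_short by lia. ring.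
Qed.

Lemma Dp_test lo hi c d N σ good D :
  length σ = N ->
  (forall s, good (enc_sit s) = true -> c <= lo s /\ hi s <= d) ->
  test_supermartingale (fun _ => c) (fun _ => d) (mprod D) -> 0 < mprod D σ ->
  test_supermartingale lo hi (mprod (Dp N σ good D)).
Proof.
  intros Hσ Hg [HT1 [HT2 HT3]] Hpos.
  assert (Hnn : forall s, 0 <= mprod (Dp N σ good D) s).
  { induction s as [|y s IH] using rev_ind. rewrite mprod_nil; lra.
    rewrite mprod_snoc. unfold Dp at 2. destruct (agS N σ good s) eqn:E.
    - pose proof (HT2 (s ++ [y])). rewrite mprod_snoc, (Dp_rel _ _ _ _ _ Hσ E) in H.
      assert (0 <= mprod (Dp N σ good D) s * D s y).
      { apply Rmult_le_reg_l with (mprod D σ); auto. lra. } lra.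
    - lra. }
  split; [|split].
  - intros s p Hp. rewrite !mprod_snoc. destruct (agS N σ good s) eqn:E.
    + assert (Dq : forall x, Dp N σ good D s x = D s x) by (intro; unfold Dp; rewrite E; auto).
      rewrite !Dq.
      pose proof (agS_good _ _ _ _ Hσ E) as Hgs. apply Hg in Hgs.
      specialize (HT1 s p ltac:(lra)). rewrite !mprod_snoc, (Dp_rel _ _ _ _ _ Hσ E) in HT1.
      set (m := mprod (Dp N σ good D) s) in *.
      apply Rmult_le_reg_l with (mprod D σ); auto. rewrite Rmult_0_r.
      eapply Rle_trans; [|exact HT1]. right. ring.
    + assert (Dq : forall x, Dp N σ good D s x = 1) by (intro; unfold Dp; rewrite E; auto).
      rewrite !Dq. lra.
  - exact Hnn.
  - apply mprod_nil.
Qed.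

Lemma Dp_ag N σ good D s : length σ = N -> agS N σ good s = true -> 0 < mprod D σ ->
  mprod (Dp N σ good D) s = mprod D s / mprod D σ.
Proof.
  intros Hσ H Hp. rewrite (Dp_rel N σ good D s Hσ H). field. lra.
Qed.
Open Scope R_scope.

Lemma CF_ext_S (p : prog) (g : sit -> nat -> nat) :
  (forall d n, eval p (enc_S d ++ [n]) (g d n)) ->
  CF 2 (fun v => g (dec (nth 0 v 0%nat)) (nth 1 v 0%nat)).
Proof.
  intros H. exists p. intros [|e [|n []]] Hv; simpl in Hv; try lia.
  simpl. specialize (H (dec e) n). unfold enc_S in H. rewrite enc_dec in H. exact H.
Qed.

Lemma CF_ext_SX (p : prog) (g : sit * bool -> nat -> nat) :
  (forall d n, eval p (enc_SX d ++ [n]) (g d n)) ->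
  CF 3 (fun v => g (dec (nth 0 v 0%nat), Nat.leb 1 (nth 1 v 0%nat)) (nth 2 v 0%nat)).
Proof.
  intros H. destruct (CFB_leb 3 (fun _ => 1%nat) (fun v => nth 1 v 0%nat) (CF_const 1 3) (CF_proj 1 3 ltac:(lia))) as [q Hq].
  exists (PComp p [PProj 0; q; PProj 2]). intros v Hv.
  econstructor. constructor. constructor. lia. constructor. apply Hq. auto.
  constructor. constructor. lia. constructor.
  specialize (H (dec (nth 0 v 0%nat), Nat.leb 1 (nth 1 v 0%nat)) (nth 2 v 0%nat)).
  unfold enc_SX in H. cbn [fst snd app] in H. rewrite enc_dec in H. exact H.
Qed.

Lemma CF_ext_N (p : prog) (g : nat -> nat -> nat) :
  (forall d n, eval p (enc_N d ++ [n]) (g d n)) ->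
  CF 2 (fun v => g (nth 0 v 0%nat) (nth 1 v 0%nat)).
Proof.
  intros H. exists p. intros [|e [|n []]] Hv; simpl in Hv; try lia. apply H.
Qed.

Definition goodN (tl th : option (nat * nat)) (glo ghi : sit -> nat -> nat) (n0 : nat) (e : nat) : bool :=
  goodlo tl (glo (dec e) n0) && goodhi th (ghi (dec e) n0).

Lemma CFB_goodN tl th plo glo phi ghi n0 :
  (forall d n, eval plo (enc_S d ++ [n]) (glo d n)) ->
  (forall d n, eval phi (enc_S d ++ [n]) (ghi d n)) ->
  CFB 1 (fun v => goodN tl th glo ghi n0 (nth 0 v 0%nat)).
Proof.
  intros Hl Hh. unfold goodN. apply CFB_and.
  - apply (CFB_use1 (goodlo tl)). apply CFB_goodlo.
    apply (CF_use2 (fun e n => glo (dec e) n)). apply (CF_ext_S plo); auto.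
    apply CF_proj; lia. apply CF_const.
  - apply (CFB_use1 (goodhi th)). apply CFB_goodhi.
    apply (CF_use2 (fun e n => ghi (dec e) n)). apply (CF_ext_S phi); auto.
    apply CF_proj; lia. apply CF_const.
Qed.

Definition FT N es good M (gT : sit -> nat -> nat) (e n : nat) : nat :=
  if extN N es e then SC M (gT (dec (HN N es good e)) n) else 3%nat.

Lemma CF_FT N es good M p gT : CFB 1 (fun v => good (nth 0 v 0%nat)) ->
  (forall d n, eval p (enc_S d ++ [n]) (gT d n)) ->
  CF2 (FT N es good M gT).
Proof.
  intros Hg Hp. unfold FT, CF2. apply CF_ite.
  - apply (CFB_use1 (extN N es)). apply CFB_extN. apply CF_proj; lia.
  - apply (CF_use1 (SC M)). apply CF_SC.
    apply (CF_use2 (fun e n => gT (dec e) n)). apply (CF_ext_S p); auto.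
    apply (CF_use1 (HN N es good)). apply CF_HN; auto. apply CF_proj; lia. apply CF_proj; lia.
  - apply CF_const.
Qed.

Lemma prog_of_CF2 (f : nat -> nat -> nat) : CF2 f -> exists p, forall d n, eval p (enc_S d ++ [n]) (f (enc_sit d) n).
Proof. intros [p H]. exists p. intros d n. apply (H [enc_sit d; n]). reflexivity. Qed.

Lemma hS_dec N σ good s : dec (HN N (enc_sit σ) good (enc_sit s)) = hS N σ good s.
Proof. reflexivity. Qed.

Lemma comp_Tp N σ good M T : (1 <= M)%nat -> CFB 1 (fun v => good (nth 0 v 0%nat)) ->
  computable enc_S T -> computable enc_S (Tp N σ good M T).
Proof.
  intros HM Hg [p [gT H]].
  destruct (prog_of_CF2 _ (CF_FT N (enc_sit σ) good M p gT Hg (fun d n => proj1 (H d n)))) as [q Hq].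
  exists q, (fun s n => FT N (enc_sit σ) good M gT (enc_sit s) n). intros s n. split; auto.
  unfold FT, Tp. fold (extS N σ s). destruct (extS N σ s).
  - rewrite Q2R_SC by auto. fold (hS N σ good s).
    destruct (H (hS N σ good s) n) as [_ Hb].
    assert (HMp : 1 <= INR M) by (apply (le_INR 1); lia).
    replace (T (hS N σ good s) / INR M - Q2R (decQ (gT (hS N σ good s) n)) / INR M)
      with ((T (hS N σ good s) - Q2R (decQ (gT (hS N σ good s) n))) / INR M) by (field; lra).
    rewrite Rabs_div by lra. rewrite (Rabs_right (INR M)) by lra.
    apply Rle_lt_trans with (Rabs (T (hS N σ good s) - Q2R (decQ (gT (hS N σ good s) n)))); auto.
    apply Rcomplements.Rle_div_l. lra. pose proof (Rabs_pos (T (hS N σ good s) - Q2R (decQ (gT (hS N σ good s) n)))). nra.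
  - rewrite Q2R_decQ3. rewrite Rminus_diag, Rabs_R0. apply Rinv_0_lt_compat, pow_lt. lra.
Qed.

Lemma lsc_Tp N σ good M T : (1 <= M)%nat -> CFB 1 (fun v => good (nth 0 v 0%nat)) ->
  lower_semicomputable enc_S T -> lower_semicomputable enc_S (Tp N σ good M T).
Proof.
  intros HM Hg [p [gT [H1 [H2 H3]]]].
  destruct (prog_of_CF2 _ (CF_FT N (enc_sit σ) good M p gT Hg H1)) as [q Hq].
  exists q, (fun s n => FT N (enc_sit σ) good M gT (enc_sit s) n). split; [auto|split].
  - intros s n. unfold FT. fold (extS N σ s). destruct (extS N σ s).
    + fold (hS N σ good s). rewrite (Q2R_SC M (gT (hS N σ good s) n)), (Q2R_SC M (gT (hS N σ good s) (S n))) by auto.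
      assert (0 < INR M) by (apply lt_0_INR; lia).
      unfold Rdiv. apply Rmult_le_compat_r. left. apply Rinv_0_lt_compat; auto. apply H2.
    + lra.
  - intros s. unfold FT, Tp. fold (extS N σ s). destruct (extS N σ s).
    + fold (hS N σ good s).
      apply (is_lim_seq_ext (fun n => Q2R (decQ (gT (hS N σ good s) n)) * / INR M)).
      intros n. rewrite Q2R_SC by auto. reflexivity.
      pose proof (is_lim_seq_scal_r _ (/ INR M) _ (H3 (hS N σ good s))) as HL. exact HL.
    + apply (is_lim_seq_ext (fun _ => 1)). intros n. rewrite Q2R_decQ3. reflexivity. apply is_lim_seq_const.
Qed.

Lemma comp_scaleN M tau : (1 <= M)%nat -> computable enc_N tau ->
  computable enc_N (fun n => tau n / INR M).
Proof.
  intros HM [p [g H]].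
  assert (CF2 (fun d n => SC M (g d n))).
  { apply (CF_use1 (SC M)). apply CF_SC. apply (CF_ext_N p). intros; apply H. }
  destruct H0 as [q Hq]. exists q, (fun d n => SC M (g d n)). intros d n. split.
  apply (Hq [d; n]). reflexivity.
  rewrite Q2R_SC by auto. destruct (H d n) as [_ Hb].
  assert (HMp : 1 <= INR M) by (apply (le_INR 1); lia).
  replace (tau d / INR M - Q2R (decQ (g d n)) / INR M)
    with ((tau d - Q2R (decQ (g d n))) / INR M) by (field; lra).
  rewrite Rabs_div by lra. rewrite (Rabs_right (INR M)) by lra.
  apply Rle_lt_trans with (Rabs (tau d - Q2R (decQ (g d n)))); auto.
  apply Rcomplements.Rle_div_l. lra. pose proof (Rabs_pos (tau d - Q2R (decQ (g d n)))). nra.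
Qed.

Definition FD N es good (gD : sit * bool -> nat -> nat) (e xb n : nat) : nat :=
  if allgoodN N es good e then gD (dec e, Nat.leb 1 xb) n else 3%nat.

Lemma lsc_Dp N σ good D : CFB 1 (fun v => good (nth 0 v 0%nat)) ->
  lower_semicomputable enc_SX (fun sx => D (fst sx) (snd sx)) ->
  lower_semicomputable enc_SX (fun sx => Dp N σ good D (fst sx) (snd sx)).
Proof.
  intros Hg [p [gD [H1 [H2 H3]]]].
  assert (CF 3 (fun v => FD N (enc_sit σ) good gD (nth 0 v 0%nat) (nth 1 v 0%nat) (nth 2 v 0%nat))).
  { unfold FD. apply CF_ite. apply (CFB_use1 (allgoodN N (enc_sit σ) good)). apply CFB_allgoodN; auto.
    apply CF_proj; lia. apply (CF_ext_SX p gD H1). apply CF_const. }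
  destruct H as [q Hq].
  exists q, (fun (sx : sit * bool) (n : nat) => FD N (enc_sit σ) good gD (enc_sit (fst sx)) (if snd sx then 1%nat else 0%nat) n).
  assert (Hb : forall x : bool, Nat.leb 1 (if x then 1%nat else 0%nat) = x) by (intros []; reflexivity).
  split; [|split].
  - intros [s x] n. apply (Hq [enc_sit s; if x then 1 else 0; n]%nat). reflexivity.
  - intros [s x] n. unfold FD. cbn [fst snd]. fold (agS N σ good s). rewrite dec_enc, Hb.
    destruct (agS N σ good s). apply (H2 (s, x)). lra.
  - intros [s x]. unfold FD, Dp. cbn [fst snd]. fold (agS N σ good s). rewrite dec_enc, Hb.
    destruct (agS N σ good s). apply (H3 (s, x)).
    apply (is_lim_seq_ext (fun _ => 1)). intros n. rewrite Q2R_decQ3. reflexivity. apply is_lim_seq_const.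
Qed.
Open Scope R_scope.

Lemma LimInf_eq u : is_LimInf_seq u (LimInf_seq u).
Proof. destruct (ex_LimInf_seq u) as [l Hl]. rewrite (is_LimInf_seq_unique _ _ Hl). exact Hl. Qed.
Lemma LimSup_eq u : is_LimSup_seq u (LimSup_seq u).
Proof. destruct (ex_LimSup_seq u) as [l Hl]. rewrite (is_LimSup_seq_unique _ _ Hl). exact Hl. Qed.

Lemma liminf_ev u l eps : LimInf_seq u = Finite l -> 0 < eps ->
  exists N, forall n, (N <= n)%nat -> l - eps < u n.
Proof.
  intros H He. pose proof (LimInf_eq u) as Hl. rewrite H in Hl.
  destruct (Hl (mkposreal eps He)) as [_ [N HN]]. exists N. exact HN.
Qed.
Lemma limsup_ev u l eps : LimSup_seq u = Finite l -> 0 < eps ->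
  exists N, forall n, (N <= n)%nat -> u n < l + eps.
Proof.
  intros H He. pose proof (LimSup_eq u) as Hl. rewrite H in Hl.
  destruct (Hl (mkposreal eps He)) as [_ [N HN]]. exists N. exact HN.
Qed.

Lemma liminf_fin u : (forall n, 0 <= u n <= 1) ->
  LimInf_seq u = Finite (real (LimInf_seq u)) /\ 0 <= real (LimInf_seq u) <= 1.
Proof.
  intros H. assert (H0 : Rbar_le (LimInf_seq (fun _ => 0)) (LimInf_seq u)).
  { apply LimInf_le. exists 0%nat. intros. apply H. }
  assert (H1 : Rbar_le (LimInf_seq u) (LimInf_seq (fun _ => 1))).
  { apply LimInf_le. exists 0%nat. intros. apply H. }
  rewrite LimInf_seq_const in H0, H1. destruct (LimInf_seq u); simpl in *; try tauto.
Qed.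
Lemma limsup_fin u : (forall n, 0 <= u n <= 1) ->
  LimSup_seq u = Finite (real (LimSup_seq u)) /\ 0 <= real (LimSup_seq u) <= 1.
Proof.
  intros H. assert (H0 : Rbar_le (LimSup_seq (fun _ => 0)) (LimSup_seq u)).
  { apply LimSup_le. exists 0%nat. intros. apply H. }
  assert (H1 : Rbar_le (LimSup_seq u) (LimSup_seq (fun _ => 1))).
  { apply LimSup_le. exists 0%nat. intros. apply H. }
  rewrite LimSup_seq_const in H0, H1. destruct (LimSup_seq u); simpl in *; try tauto.
Qed.

Lemma limsup_scale_inf u v a : LimSup_seq u = p_infty -> 0 < a ->
  (exists N, forall n, (N <= n)%nat -> v n = a * u n) -> LimSup_seq v = p_infty.
Proof.
  intros H Ha [N HN]. apply is_LimSup_seq_unique.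
  pose proof (is_LimSup_seq_scal_pos a u _ Ha (LimSup_eq u)) as Hs. rewrite H in Hs.
  simpl in Hs. destruct (Rle_dec 0 a); [|lra]. destruct (Rle_lt_or_eq_dec 0 a r); [|lra].
  eapply is_LimSup_seq_ext_loc; [|exact Hs]. exists N. intros. symmetry. auto.
Qed.

Lemma limsup_scale_nonneg u v a : Rbar_le 0 (LimSup_seq u) -> 0 < a ->
  (exists N, forall n, (N <= n)%nat -> v n = a * u n) -> Rbar_le 0 (LimSup_seq v).
Proof.
  intros H Ha [N HN].
  pose proof (is_LimSup_seq_scal_pos a u _ Ha (LimSup_eq u)) as Hs.
  assert (Hv : LimSup_seq v = Rbar_mult a (LimSup_seq u)).
  { apply is_LimSup_seq_unique. eapply is_LimSup_seq_ext_loc; [|exact Hs].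
    exists N. intros. symmetry. auto. }
  rewrite Hv. destruct (LimSup_seq u); simpl in *; auto.
  apply Rmult_le_pos; lra.
  destruct (Rle_dec 0 a); [|lra]. destruct (Rle_lt_or_eq_dec 0 a r); [|lra]. exact I. contradiction.
Qed.

Lemma rat_between a b : 0 < a -> a < b ->
  exists tn td : nat, (0 < tn)%nat /\ (0 < td)%nat /\ a <= INR tn / INR td <= b.
Proof.
  intros Ha Hab.
  destruct (archimed (/ (b - a))) as [H1 _].
  set (td := S (Z.to_nat (up (/ (b - a))))).
  assert (Htd : / (b - a) < INR td).
  { unfold td. rewrite S_INR, INR_IZR_INZ.
    destruct (Z_le_gt_dec 0 (up (/ (b - a)))).
    - rewrite Z2Nat.id by auto. lra.
    - replace (Z.to_nat (up (/ (b - a)))) with 0%nat by lia. simpl. assert (IZR (up (/ (b - a))) <= 0) by (apply (IZR_le _ 0); lia).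
      assert (0 < / (b - a)) by (apply Rinv_0_lt_compat; lra). lra. }
  assert (Htd0 : 0 < INR td) by (apply lt_0_INR; unfold td; lia).
  destruct (archimed (a * INR td)) as [H2 H3].
  assert (Hp : (0 < up (a * INR td))%Z).
  { apply lt_IZR. assert (0 < a * INR td) by nra. lra. }
  exists (Z.to_nat (up (a * INR td))), td. split; [lia|split; [unfold td; lia|]].
  rewrite INR_IZR_INZ, Z2Nat.id by lia. split.
  - apply Rcomplements.Rle_div_r; auto. lra.
  - apply Rcomplements.Rle_div_l; auto.
    assert (1 < (b - a) * INR td).
    { apply Rmult_lt_reg_l with (/ (b - a)). apply Rinv_0_lt_compat; lra.
      rewrite <- Rmult_assoc, Rinv_l, Rmult_1_l, Rmult_1_r by lra. exact Htd. }
    nra.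
Qed.

Lemma pow2_ge n : INR n + 1 <= 2 ^ n.
Proof.
  induction n. simpl. lra. rewrite S_INR. change (2 ^ S n) with (2 * 2 ^ n). pose proof (pos_INR n). lra.
Qed.

Lemma small_pow eps : 0 < eps -> exists n, / 2 ^ n < eps.
Proof.
  intros He. destruct (archimed (/ eps)) as [H1 _].
  exists (Z.to_nat (up (/ eps))). pose proof (pow2_ge (Z.to_nat (up (/ eps)))).
  assert (/ eps < INR (Z.to_nat (up (/ eps))) + 1).
  { rewrite INR_IZR_INZ. destruct (Z_le_gt_dec 0 (up (/ eps))).
    - rewrite Z2Nat.id by auto. lra.
    - replace (Z.to_nat (up (/ eps))) with 0%nat by lia. simpl. assert (IZR (up (/ eps)) <= 0) by (apply (IZR_le _ 0); lia).
      assert (0 < / eps) by (apply Rinv_0_lt_compat; lra). lra. }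
  assert (0 < / eps) by (apply Rinv_0_lt_compat; lra).
  assert (0 < 2 ^ (Z.to_nat (up (/ eps)))) by (apply pow_lt; lra).
  rewrite <- (Rinv_inv eps) at 2. apply Rinv_lt_contravar. apply Rmult_lt_0_compat; lra. lra.
Qed.
Open Scope R_scope.

Lemma liminf_pos_ev u eps : Rbar_le 0 (LimInf_seq u) -> 0 < eps ->
  exists N, forall n, (N <= n)%nat -> - eps < u n.
Proof.
  intros H He. pose proof (LimInf_eq u) as Hl. destruct (LimInf_seq u) as [l| |]; simpl in H.
  - destruct (Hl (mkposreal eps He)) as [_ [N HN]]. exists N. intros n Hn. specialize (HN n Hn). simpl in HN. lra.
  - destruct (Hl (- eps)) as [N HN]. exists N. exact HN.
  - contradiction.
Qed.
Lemma limsup_neg_ev u eps : Rbar_le (LimSup_seq u) 0 -> 0 < eps ->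
  exists N, forall n, (N <= n)%nat -> u n < eps.
Proof.
  intros H He. pose proof (LimSup_eq u) as Hl. destruct (LimSup_seq u) as [l| |]; simpl in H.
  - destruct (Hl (mkposreal eps He)) as [_ [N HN]]. exists N. intros n Hn. specialize (HN n Hn). simpl in HN. lra.
  - contradiction.
  - destruct (Hl eps) as [N HN]. exists N. exact HN.
Qed.
Lemma liminf_pos_of u : (forall eps, 0 < eps -> exists N, forall n, (N <= n)%nat -> - eps <= u n) ->
  Rbar_le 0 (LimInf_seq u).
Proof.
  intros H. assert (Hk : forall eps, 0 < eps -> Rbar_le (- eps) (LimInf_seq u)).
  { intros eps He. rewrite <- (LimInf_seq_const (- eps)). apply LimInf_le. apply H; auto. }
  destruct (LimInf_seq u) as [l| |]; simpl in *; auto.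
  - destruct (Rle_dec 0 l); auto. specialize (Hk (- l / 2) ltac:(lra)). lra.
  - specialize (Hk 1 ltac:(lra)). auto.
Qed.
Lemma limsup_neg_of u : (forall eps, 0 < eps -> exists N, forall n, (N <= n)%nat -> u n <= eps) ->
  Rbar_le (LimSup_seq u) 0.
Proof.
  intros H. assert (Hk : forall eps, 0 < eps -> Rbar_le (LimSup_seq u) eps).
  { intros eps He. rewrite <- (LimSup_seq_const eps). apply LimSup_le. apply H; auto. }
  destruct (LimSup_seq u) as [l| |]; simpl in *; auto.
  - destruct (Rle_dec l 0); auto. specialize (Hk (l / 2) ltac:(lra)). lra.
  - specialize (Hk 1 ltac:(lra)). auto.
Qed.

Lemma psum_minus f g n : psum f n - psum g n = psum (fun k => f k - g k) n.
Proof. induction n; simpl. ring. rewrite <- IHn. ring. Qed.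
Lemma psum_mono_from f N n : (N <= n)%nat -> (forall k, (N <= k)%nat -> 0 <= f k) -> psum f N <= psum f n.
Proof. induction 1 as [|m Hm IH]; intros Hf. lra. simpl. specialize (IH Hf). specialize (Hf m Hm). lra. Qed.
Lemma psum_ext f g n : (forall k, f k = g k) -> psum f n = psum g n.
Proof. intros H; induction n; simpl; auto. rewrite IHn, H. reflexivity. Qed.
Lemma psum_nonneg f n : (forall k, 0 <= f k) -> 0 <= psum f n.
Proof. intros H; induction n; simpl. lra. specialize (H n). lra. Qed.

Lemma count_ev S w Mx : is_lim_seq (sel_count S w) p_infty ->
  exists N, forall n, (N <= n)%nat -> Mx < sel_count S w n.
Proof.
  intros H. apply is_lim_seq_spec in H. destruct (H Mx) as [N HN]. exists N. exact HN.
Qed.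

Lemma b2R_bounds b : 0 <= b2R b <= 1.
Proof. destruct b; simpl; lra. Qed.

Lemma CH_transfer lo hi w S (c d : R) :
  (exists N, forall n, (N <= n)%nat -> c <= lo (prefix w n) /\ hi (prefix w n) <= d) ->
  CH_condition lo hi w S -> CH_condition (fun _ => c) (fun _ => d) w S.
Proof.
  intros [N0 HN0] HC Hcnt. destruct (HC Hcnt) as [HL HU].
  set (cS := sel_count S w) in *.
  split.
  - apply liminf_pos_of. intros eps He.
    set (P := fun n => psum (fun k => b2R (S (prefix w k)) * (lo (prefix w k) - c)) n).
    set (K := P N0).
    destruct (liminf_pos_ev _ (eps / 2) HL ltac:(lra)) as [N1 HN1].
    destruct (count_ev S w (Rmax 1 (2 * Rabs K / eps)) Hcnt) as [N2 HN2].
    exists (N0 + N1 + N2)%nat. intros n Hn.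
    specialize (HN1 n ltac:(lia)). specialize (HN2 n ltac:(lia)). fold cS in HN2.
    assert (Hc1 : 1 < cS n) by (pose proof (Rmax_l 1 (2 * Rabs K / eps)); lra).
    assert (Hc2 : 2 * Rabs K / eps < cS n) by (pose proof (Rmax_r 1 (2 * Rabs K / eps)); lra).
    assert (HP : K <= P n).
    { apply psum_mono_from. lia. intros k Hk. pose proof (b2R_bounds (S (prefix w k))).
      destruct (HN0 k Hk). nra. }
    assert (Heq : sel_avg S (fun _ => c) w n = sel_avg S lo w n + P n / cS n).
    { unfold sel_avg, P. fold cS. unfold Rdiv. rewrite <- Rmult_plus_distr_r. f_equal.
      rewrite <- (Rplus_0_r (psum _ n)) at 1.
      assert (psum (fun k => b2R (S (prefix w k)) * (b2R (w k) - c)) n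
              - psum (fun k => b2R (S (prefix w k)) * (b2R (w k) - lo (prefix w k))) n
              = psum (fun k => b2R (S (prefix w k)) * (lo (prefix w k) - c)) n).
      { rewrite psum_minus. apply psum_ext. intros k. ring. }
      lra. }
    rewrite Heq.
    assert (K / cS n >= - (eps / 2)).
    { apply Rle_ge. apply Rcomplements.Rle_div_r. lra.
      assert (2 * Rabs K < eps * cS n).
      { apply Rcomplements.Rlt_div_l in Hc2; lra. }
      pose proof (Rabs_pos K). pose proof (Rle_abs (- K)). rewrite Rabs_Ropp in H1. nra. }
    assert (K / cS n <= P n / cS n).
    { unfold Rdiv. apply Rmult_le_compat_r; auto. left. apply Rinv_0_lt_compat. lra. }
    lra.
  - apply limsup_neg_of. intros eps He.
    set (P := fun n => psum (fun k => b2R (S (prefix w k)) * (d - hi (prefix w k))) n).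
    set (K := P N0).
    destruct (limsup_neg_ev _ (eps / 2) HU ltac:(lra)) as [N1 HN1].
    destruct (count_ev S w (Rmax 1 (2 * Rabs K / eps)) Hcnt) as [N2 HN2].
    exists (N0 + N1 + N2)%nat. intros n Hn.
    specialize (HN1 n ltac:(lia)). specialize (HN2 n ltac:(lia)). fold cS in HN2.
    assert (Hc1 : 1 < cS n) by (pose proof (Rmax_l 1 (2 * Rabs K / eps)); lra).
    assert (Hc2 : 2 * Rabs K / eps < cS n) by (pose proof (Rmax_r 1 (2 * Rabs K / eps)); lra).
    assert (HP : K <= P n).
    { apply psum_mono_from. lia. intros k Hk. pose proof (b2R_bounds (S (prefix w k))).
      destruct (HN0 k Hk). nra. }
    assert (Heq : sel_avg S (fun _ => d) w n = sel_avg S hi w n - P n / cS n).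
    { unfold sel_avg, P. fold cS. unfold Rdiv. rewrite <- Rmult_minus_distr_r. f_equal.
      assert (psum (fun k => b2R (S (prefix w k)) * (b2R (w k) - hi (prefix w k))) n
              - psum (fun k => b2R (S (prefix w k)) * (b2R (w k) - d)) n
              = psum (fun k => b2R (S (prefix w k)) * (d - hi (prefix w k))) n).
      { rewrite psum_minus. apply psum_ext. intros k. ring. }
      lra. }
    rewrite Heq.
    assert (K / cS n >= - (eps / 2)).
    { apply Rle_ge. apply Rcomplements.Rle_div_r. lra.
      assert (2 * Rabs K < eps * cS n).
      { apply Rcomplements.Rlt_div_l in Hc2; lra. }
      pose proof (Rabs_pos K). pose proof (Rle_abs (- K)). rewrite Rabs_Ropp in H1. nra. }
    assert (K / cS n <= P n / cS n).
    { unfold Rdiv. apply Rmult_le_compat_r; auto. left. apply Rinv_0_lt_compat. lra. }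
    lra.
Qed.
Open Scope R_scope.

Lemma prefix_snoc w n : prefix w (S n) = prefix w n ++ [w n].
Proof. unfold prefix. rewrite seq_S, map_app. reflexivity. Qed.
Lemma length_prefix w n : length (prefix w n) = n.
Proof. unfold prefix. rewrite length_map, length_seq. reflexivity. Qed.
Lemma prefix_firstn w k n : (k <= n)%nat -> firstn k (prefix w n) = prefix w k.
Proof.
  induction n; intros Hk.
  - assert (k = 0%nat) by lia. subst. reflexivity.
  - destruct (Nat.eq_dec k (S n)). subst. apply firstn_all2. rewrite length_prefix. lia.
    rewrite prefix_snoc, firstn_app, length_prefix. replace (k - n)%nat with 0%nat by lia.
    simpl. rewrite app_nil_r. apply IHn. lia.
Qed.

Lemma nat_above x : exists M : nat, (1 <= M)%nat /\ x <= INR M.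
Proof.
  destruct (archimed x) as [H1 _]. exists (S (Z.to_nat (up x))). split. lia.
  rewrite S_INR, INR_IZR_INZ. destruct (Z_le_gt_dec 0 (up x)).
  - rewrite Z2Nat.id by auto. lra.
  - replace (Z.to_nat (up x)) with 0%nat by lia. simpl.
    assert (IZR (up x) <= 0) by (apply (IZR_le _ 0); lia). lra.
Qed.

Lemma good_exists lo hi w e1 e2 plo glo phi ghi :
  forecasting_system lo hi ->
  (forall d n, eval plo (enc_S d ++ [n]) (glo d n) /\ Rabs (lo d - Q2R (decQ (glo d n))) < / 2 ^ n) ->
  (forall d n, eval phi (enc_S d ++ [n]) (ghi d n) /\ Rabs (hi d - Q2R (decQ (ghi d n))) < / 2 ^ n) ->
  0 < e1 -> 0 < e2 ->
  exists tl th n0,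
    (forall s, goodN tl th glo ghi n0 (enc_sit s) = true ->
       Rmax (real (LimInf_seq (fun n => lo (prefix w n))) - e1) 0 <= lo s /\
       hi s <= Rmin (real (LimSup_seq (fun n => hi (prefix w n))) + e2) 1) /\
    (exists N0, forall n, (N0 <= n)%nat -> goodN tl th glo ghi n0 (enc_sit (prefix w n)) = true).
Proof.
  intros Hfs Hlo Hhi He1 He2.
  destruct (liminf_fin (fun n => lo (prefix w n))) as [HLf HLb].
  { intros n. destruct (Hfs (prefix w n)). lra. }
  destruct (limsup_fin (fun n => hi (prefix w n))) as [HUf HUb].
  { intros n. destruct (Hfs (prefix w n)). lra. }
  set (Lr := real (LimInf_seq (fun n => lo (prefix w n)))) in *.
  set (Ur := real (LimSup_seq (fun n => hi (prefix w n)))) in *.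
  destruct (small_pow (Rmin e1 e2 / 4)) as [n0 Hn0].
  { apply Rmin_case; lra. }
  set (η := / 2 ^ n0) in *.
  assert (Hη : 0 < η) by (apply Rinv_0_lt_compat, pow_lt; lra).
  assert (Hη1 : η < e1 / 4) by (pose proof (Rmin_l e1 e2); lra).
  assert (Hη2 : η < e2 / 4) by (pose proof (Rmin_r e1 e2); lra).
  assert (Hlow : exists tl, (forall s, goodlo tl (glo s n0) = true -> Rmax (Lr - e1) 0 <= lo s) /\
                  (exists N, forall n, (N <= n)%nat -> goodlo tl (glo (prefix w n) n0) = true)).
  { destruct (Rle_dec (Lr - e1) 0).
    - exists None. split. intros s _. rewrite Rmax_right by lra. apply Hfs.
      exists 0%nat. reflexivity.
    - destruct (rat_between (Lr - e1 + η) (Lr - e1 / 2 - η)) as [tn [td [Htn [Htd Ht]]]]; try lra.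
      exists (Some (tn, td)). split.
      + intros s Hg. apply goodlo_iff in Hg; auto. rewrite Rmax_left by lra.
        destruct (Hlo s n0) as [_ Ha]. apply Rabs_def2 in Ha. fold η in Ha. lra.
      + destruct (liminf_ev _ Lr (e1 / 2) HLf ltac:(lra)) as [N HN]. exists N. intros m Hn.
        apply goodlo_iff; auto. specialize (HN m Hn).
        destruct (Hlo (prefix w m) n0) as [_ Ha]. apply Rabs_def2 in Ha. fold η in Ha. lra. }
  assert (Hup : exists th, (forall s, goodhi th (ghi s n0) = true -> hi s <= Rmin (Ur + e2) 1) /\
                  (exists N, forall n, (N <= n)%nat -> goodhi th (ghi (prefix w n) n0) = true)).
  { destruct (Rle_dec 1 (Ur + e2)).
    - exists None. split. intros s _. rewrite Rmin_right by lra. apply Hfs.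
      exists 0%nat. reflexivity.
    - destruct (rat_between (Ur + e2 / 2 + η) (Ur + e2 - η)) as [tn [td [Htn [Htd Ht]]]]; try lra.
      exists (Some (tn, td)). split.
      + intros s Hg. apply goodhi_iff in Hg; auto. rewrite Rmin_left by lra.
        destruct (Hhi s n0) as [_ Ha]. apply Rabs_def2 in Ha. fold η in Ha. lra.
      + destruct (limsup_ev _ Ur (e2 / 2) HUf ltac:(lra)) as [N HN]. exists N. intros m Hn.
        apply goodhi_iff; auto. specialize (HN m Hn).
        destruct (Hhi (prefix w m) n0) as [_ Ha]. apply Rabs_def2 in Ha. fold η in Ha. lra. }
  destruct Hlow as [tl [Hl1 [N1 Hl2]]]. destruct Hup as [th [Hh1 [N2 Hh2]]].
  exists tl, th, n0. split.
  - intros s Hg. unfold goodN in Hg. rewrite dec_enc in Hg. apply Bool.andb_true_iff in Hg.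
    destruct Hg. split; auto.
  - exists (N1 + N2)%nat. intros n Hn. unfold goodN. rewrite dec_enc, Hl2, Hh2 by lia. reflexivity.
Qed.

Theorem proposition13 (Rn : rnotion) (lo hi : sit -> R) (w : path) (e1 e2 : R) :
  forecasting_system lo hi ->
  computable_fs lo hi ->
  random Rn lo hi w ->
  0 < e1 -> 0 < e2 ->
  random Rn
    (fun _ => Rmax (real (LimInf_seq (fun n => lo (prefix w n))) - e1) 0)
    (fun _ => Rmin (real (LimSup_seq (fun n => hi (prefix w n))) + e2) 1)
    w.
Proof.
  intros Hfs [[plo [glo Hlo]] [phi [ghi Hhi]]] Hrand He1 He2.
  destruct (good_exists lo hi w e1 e2 plo glo phi ghi Hfs Hlo Hhi He1 He2)
    as [tl [th [n0 [Hg [N0 HN0]]]]].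
  set (c := Rmax (real (LimInf_seq (fun n => lo (prefix w n))) - e1) 0) in *.
  set (d := Rmin (real (LimSup_seq (fun n => hi (prefix w n))) + e2) 1) in *.
  set (good := goodN tl th glo ghi n0) in *.
  assert (Hcfb : CFB 1 (fun v => good (nth 0 v 0%nat))).
  { apply (CFB_goodN tl th plo glo phi ghi n0); intros; [apply Hlo | apply Hhi]. }
  set (N := S N0). set (σ := prefix w N).
  assert (Hσ : length σ = N) by apply length_prefix.
  assert (HN1 : (1 <= N)%nat) by (unfold N; lia).
  assert (Hag : forall n, (N <= n)%nat -> agS N σ good (prefix w n) = true).
  { intros n Hn. apply agS_iff; auto. rewrite length_prefix. split. split; auto.
    apply prefix_firstn; auto. intros k Hk. rewrite prefix_firstn by lia. apply HN0. unfold N in Hk. lia. }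
  assert (Hev : exists N, forall n, (N <= n)%nat -> c <= lo (prefix w n) /\ hi (prefix w n) <= d).
  { exists N0. intros n Hn. apply Hg. apply HN0. auto. }
  destruct Rn; simpl in *.
  -
    intros [T [HTl [HTt HTlim]]]. apply Hrand.
    destruct (nat_above (T σ)) as [M [HM HTM]].
    exists (Tp N σ good M T). split; [|split].
    + apply lsc_Tp; auto.
    + eapply Tp_test; eauto.
    + apply (limsup_scale_inf _ _ (/ INR M) HTlim).
      apply Rinv_0_lt_compat, lt_0_INR; lia.
      exists N. intros n Hn. rewrite Tp_ag by auto. unfold Rdiv. ring.
  -
    intros [D [HDl [HDt HDlim]]]. apply Hrand.
    assert (Hpos : 0 < mprod D σ).
    { destruct HDt as [_ [HD2 _]]. destruct (HD2 σ) as [|E]; auto. exfalso.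
      assert (Hz : forall n, (N <= n)%nat -> mprod D (prefix w n) = 0).
      { induction 1. fold σ. auto. rewrite prefix_snoc, mprod_snoc, IHle. ring. }
      assert (Rbar_le (LimSup_seq (fun n => mprod D (prefix w n))) (LimSup_seq (fun _ => 0))).
      { apply LimSup_le. exists N. intros n Hn. rewrite Hz; auto. lra. }
      rewrite HDlim, LimSup_seq_const in H. simpl in H. exact H. }
    exists (Dp N σ good D). split; [|split].
    + apply lsc_Dp; auto.
    + eapply Dp_test; eauto.
    + apply (limsup_scale_inf _ _ (/ mprod D σ) HDlim).
      apply Rinv_0_lt_compat; auto.
      exists N. intros n Hn. rewrite Dp_ag by auto. unfold Rdiv. ring.
  -
    intros [T [HTc [HTt HTlim]]]. apply Hrand.
    destruct (nat_above (T σ)) as [M [HM HTM]].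
    exists (Tp N σ good M T). split; [|split].
    + apply comp_Tp; auto.
    + eapply Tp_test; eauto.
    + apply (limsup_scale_inf _ _ (/ INR M) HTlim).
      apply Rinv_0_lt_compat, lt_0_INR; lia.
      exists N. intros n Hn. rewrite Tp_ag by auto. unfold Rdiv. ring.
  -
    intros [T [tau [HTc [HTt [Htc [Htn [Htm [Htu Hlim]]]]]]]]. apply Hrand.
    destruct (nat_above (T σ)) as [M [HM HTM]].
    assert (HMp : 0 < INR M) by (apply lt_0_INR; lia).
    exists (Tp N σ good M T), (fun n => tau n / INR M).
    split; [|split; [|split; [|split; [|split; [|split]]]]].
    + apply comp_Tp; auto.
    + eapply Tp_test; eauto.
    + apply comp_scaleN; auto.
    + intros n. apply Rcomplements.Rdiv_le_0_compat; auto.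
    + intros n m Hnm. unfold Rdiv. apply Rmult_le_compat_r. left. apply Rinv_0_lt_compat; auto. auto.
    + intros Mx. destruct (Htu (Mx * INR M)) as [n Hn]. exists n.
      apply Rlt_gt. apply Rcomplements.Rlt_div_r; auto.
    + apply (limsup_scale_nonneg _ _ (/ INR M) Hlim).
      apply Rinv_0_lt_compat; auto.
      exists N. intros n Hn. rewrite Tp_ag by auto. field. lra.
  -
    intros S HS. apply (CH_transfer lo hi); auto.
  -
    intros S HS Ht. apply (CH_transfer lo hi); auto.
Qed.
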